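(* Let $w,\kappa>0$, $\beta,c\in\mathbb{R}$ with $c\ne0$, and let $\mathcal{V}_1,\mathcal{V}_2$ be real analytic with $\mathcal{V}_1'(r)=r+r^2+\mathscr{V}_1(r)$, $\mathcal{V}_2'(r)=\kappa r+\beta r^2+\mathscr{V}_2(r)$, $\mathscr{V}_k(r)/r^2\to0$ as $r\to0$. For $U=(p_1,p_2,\xi_1,\xi_2,P_1,P_2)\in\mathcal{X}$ set \[ J(U;\mathcal{V}_1,\mathcal{V}_2,w,c):=c^2\left(\xi_1+\frac{\xi_2}{w}\right)-\int_{-1}^0\big[\mathcal{V}_1'(P_2(s+1)-P_1(s))+\mathcal{V}_2'(P_1(s+1)-P_2(s))\big]ds . \] Then: (i) $(U,c)\mapsto J(U;\mathcal{V}_1,\mathcal{V}_2,w,c)$ is analytic on $\mathcal{X}\times\mathbb{R}$, and $DJ(U;\mathcal{V}_1,\mathcal{V}_2,w,c)F(U;\mathcal{V}_1,\mathcal{V}_2,w,c)=0$ for all $U\in\mathcal{D}$; (ii) $DJ(0;\mathcal{V}_1,\mathcal{V}_2,w,c)U=c^2\xi_1+\frac{c^2}{w}\xi_2+\int_{-1}^0(P_1(s)+\kappa P_2(s))ds-\int_0^1(\kappa P_1(s)+P_2(s))ds$; (iii) if $\mathcal{V}_1=\mathcal{V}_2=\mathcal{V}$ then $J(\mathcal{S}_MU;\mathcal{V},\mathcal{V},w,c)=J(U;\mathcal{V},\mathcal{V},w,c)$, and if $w=1$ then $J(\mathcal{S}_KU;\mathcal{V}_1,\mathcal{V}_2,1,c)=J(U;\mathcal{V}_1,\mathcal{V}_2,1,c)$,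 for all $U\in\mathcal{X}$; (iv) with $\chi_0=(1,1,0,0,1,1)$ (the last two entries being constant functions), $J(U+\mu\chi_0;\mathcal{V}_1,\mathcal{V}_2,w,c)=J(U;\mathcal{V}_1,\mathcal{V}_2,w,c)$ for all $U\in\mathcal{X}$, $\mu\in\mathbb{R}$; (v) $\mathscr{J}_wU:=\xi_1+\xi_2/w$ is a bounded linear functional on $\mathcal{X}$ and $J(U;\mathcal{V}_1,\mathcal{V}_2,w,c)-J(U;\mathcal{V}_1,\mathcal{V}_2,w,\grave c)=(c^2-\grave c^2)\mathscr{J}_wU$ for all $U\in\mathcal{X}$, $\grave c\in\mathbb{R}$.
   Context: $\mathcal{X}=\{(p_1,p_2,\xi_1,\xi_2,P_1,P_2)\in\mathbb{R}^4\times C([-1,1])\times C([-1,1]):P_1(0)=p_1,P_2(0)=p_2\}$ with the maximum norm; $\mathcal{D}=\mathcal{X}\cap(\mathbb{R}^4\times C^1([-1,1])\times C^1([-1,1]))$. For $U\in\mathcal{D}$, \[ F(U;\mathcal{V}_1,\mathcal{V}_2,w,c)=\Big(\xi_1,\ \xi_2,\ c^{-2}\mathcal{V}_1'(P_2(1)-p_1)-c^{-2}\mathcal{V}_2'(p_1-P_2(-1)),\ c^{-2}w\mathcal{V}_2'(P_1(1)-p_2)-c^{-2}w\mathcal{V}_1'(p_2-P_1(-1)),\ P_1',\ P_2'\Big). \] With $(RP)(v)=P(-v)$: $\mathcal{S}_M(p_1,p_2,\xi_1,\xi_2,P_1,P_2)=(-p_1,-p_2,\xi_1,\xi_2,-RP_1,-RP_2)$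 and $\mathcal{S}_K(p_1,p_2,\xi_1,\xi_2,P_1,P_2)=(-p_2,-p_1,\xi_2,\xi_1,-RP_2,-RP_1)$. *)

(* Defs.v *)
From Stdlib Require Import Reals Lra.
From Coquelicot Require Import Coquelicot.
Open Scope R_scope.

Fixpoint prodn (g : nat -> R) (n : nat) : R :=
  match n with O => 1 | S k => prodn g k * g k end.

Definition upd {V : Type} (hs : nat -> V) (i : nat) (v : V) : nat -> V :=
  fun j => if Nat.eqb j i then v else hs j.

Definition analytic_on {V : Type} (dom : V -> Prop) (add : V -> V -> V)
  (scal : R -> V -> V) (nrm : V -> R) (f : V -> R) : Prop :=
  forall x0, dom x0 ->
  exists (A : nat -> (nat -> V) -> R) (C : nat -> R) (r : R),
    0 < r /\
    (forall n hs hs', (forall i, (i < n)%nat -> hs i = hs' i) -> A n hs = A n hs') /\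
    (forall n i hs x y a, (i < n)%nat -> (forall j, dom (hs j)) -> dom x -> dom y ->
        A n (upd hs i (add x y)) = A n (upd hs i x) + A n (upd hs i y) /\
        A n (upd hs i (scal a x)) = a * A n (upd hs i x)) /\
    (forall n hs, (forall j, dom (hs j)) ->
        Rabs (A n hs) <= C n * prodn (fun j => nrm (hs j)) n) /\
    (forall n, 0 <= C n) /\
    ex_series (fun n => C n * r ^ n) /\
    (forall h, dom h -> nrm h < r -> is_series (fun n => A n (fun _ => h)) (f (add x0 h))).

Definition bounded_linear_on {V : Type} (dom : V -> Prop) (add : V -> V -> V)
  (scal : R -> V -> V) (nrm : V -> R) (L : V -> R) : Prop :=
  (forall x y, dom x -> dom y -> L (add x y) = L x + L y) /\
  (forall a x, dom x -> L (scal a x) = a * L x) /\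
  (exists M, forall x, dom x -> Rabs (L x) <= M * nrm x).

(* elements (p1,p2,xi1,xi2,P1,P2); P1,P2 are only looked at on [-1,1] *)
Record UX := mkUX { p1 : R; p2 : R; xi1 : R; xi2 : R; P1 : R -> R; P2 : R -> R }.

Definition Uadd (U V : UX) : UX :=
  mkUX (p1 U + p1 V) (p2 U + p2 V) (xi1 U + xi1 V) (xi2 U + xi2 V)
       (fun s => P1 U s + P1 V s) (fun s => P2 U s + P2 V s).
Definition Uscal (a : R) (U : UX) : UX :=
  mkUX (a * p1 U) (a * p2 U) (a * xi1 U) (a * xi2 U)
       (fun s => a * P1 U s) (fun s => a * P2 U s).
Definition U0 : UX := mkUX 0 0 0 0 (fun _ => 0) (fun _ => 0).

Definition cont_on_I (P : R -> R) : Prop :=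
  forall s, -1 <= s <= 1 -> forall eps, 0 < eps -> exists delta, 0 < delta /\
    forall t, -1 <= t <= 1 -> Rabs (t - s) < delta -> Rabs (P t - P s) < eps.

Definition deriv_on_I (P Q : R -> R) : Prop :=
  forall s, -1 <= s <= 1 -> forall eps, 0 < eps -> exists delta, 0 < delta /\
    forall t, -1 <= t <= 1 -> Rabs (t - s) < delta ->
      Rabs (P t - P s - Q s * (t - s)) <= eps * Rabs (t - s).

(* the ambient space R^4 x C([-1,1]) x C([-1,1]) *)
Definition inY (U : UX) : Prop := cont_on_I (P1 U) /\ cont_on_I (P2 U).
Definition inX (U : UX) : Prop := inY U /\ P1 U 0 = p1 U /\ P2 U 0 = p2 U.

Definition supI (P : R -> R) : R :=
  real (Lub_Rbar (fun y => exists s, -1 <= s <= 1 /\ y = Rabs (P s))).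

Definition Unorm (U : UX) : R :=
  Rmax (Rmax (Rmax (Rabs (p1 U)) (Rabs (p2 U))) (Rmax (Rabs (xi1 U)) (Rabs (xi2 U))))
       (Rmax (supI (P1 U)) (supI (P2 U))).

Definition is_Fderiv (f : UX -> R) (U : UX) (L : UX -> R) : Prop :=
  bounded_linear_on inY Uadd Uscal Unorm L /\
  forall eps, 0 < eps -> exists delta, 0 < delta /\
    forall h, inY h -> Unorm h < delta ->
      Rabs (f (Uadd U h) - f U - L h) <= eps * Unorm h.

Definition XRdom (x : UX * R) : Prop := inX (fst x).
Definition XRadd (x y : UX * R) : UX * R := (Uadd (fst x) (fst y), snd x + snd y).
Definition XRscal (a : R) (x : UX * R) : UX * R := (Uscal a (fst x), a * snd x).
Definition XRnorm (x : UX * R) : R := Rmax (Unorm (fst x)) (Rabs (snd x)).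

Definition Jfun (V1 V2 : R -> R) (w c : R) (U : UX) : R :=
  c ^ 2 * (xi1 U + xi2 U / w)
  - RInt (fun s => Derive V1 (P2 U (s + 1) - P1 U s) + Derive V2 (P1 U (s + 1) - P2 U s))
         (-1) 0.

(* F(U) for U in D, where Q1, Q2 are P1', P2' *)
Definition Ffield (V1 V2 : R -> R) (w c : R) (U : UX) (Q1 Q2 : R -> R) : UX :=
  mkUX (xi1 U) (xi2 U)
    (/ c ^ 2 * Derive V1 (P2 U 1 - p1 U) - / c ^ 2 * Derive V2 (p1 U - P2 U (-1)))
    (/ c ^ 2 * w * Derive V2 (P1 U 1 - p2 U) - / c ^ 2 * w * Derive V1 (p2 U - P1 U (-1)))
    Q1 Q2.

Definition SM (U : UX) : UX :=
  mkUX (- p1 U) (- p2 U) (xi1 U) (xi2 U) (fun v => - P1 U (- v)) (fun v => - P2 U (- v)).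
Definition SK (U : UX) : UX :=
  mkUX (- p2 U) (- p1 U) (xi2 U) (xi1 U) (fun v => - P2 U (- v)) (fun v => - P1 U (- v)).

Definition chi0 : UX := mkUX 1 1 0 0 (fun _ => 1) (fun _ => 1).

Definition Jw (w : R) (U : UX) : R := xi1 U + xi2 U / w.

(* Main.v *)
Require Import Defs.
From Stdlib Require Import Reals.
From Coquelicot Require Import Coquelicot.
From Stdlib Require Import Lra Lia Psatz Classical ClassicalEpsilon.
Open Scope R_scope.

Lemma fact_binom_nat : forall k n,
  (Factorial.fact (k + n) <= Factorial.fact k * Factorial.fact n * 2 ^ (k + n))%nat.
Proof.
  induction k as [|k IHk]; intros n.
  - simpl. rewrite Nat.add_0_r.
    assert (1 <= 2 ^ n)%nat by (apply Nat.neq_0_lt_0, Nat.pow_nonzero; lia). nia.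
  - induction n as [|n IHn].
    + rewrite Nat.add_0_r.
      assert (1 <= 2 ^ S k)%nat by (apply Nat.neq_0_lt_0, Nat.pow_nonzero; lia). simpl Factorial.fact at 3. nia.
    + replace (S k + S n)%nat with (S (S k + n)) by lia.
      change (Factorial.fact (S (S k + n))) with (S (S k + n) * Factorial.fact (S k + n))%nat.
      specialize (IHk (S n)). replace (k + S n)%nat with (S k + n)%nat in IHk by lia.
      replace (S (S k + n) * Factorial.fact (S k + n))%nat with
        (S k * Factorial.fact (S k + n) + S n * Factorial.fact (S k + n))%nat by lia.
      rewrite Nat.pow_succ_r'.
      change (Factorial.fact (S k)) with (S k * Factorial.fact k)%nat in *.
      change (Factorial.fact (S n)) with (S n * Factorial.fact n)%nat in *.
      nia.
Qed.

Lemma fact_binom : forall k n,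
  INR (Factorial.fact (k + n)) <= INR (Factorial.fact k) * INR (Factorial.fact n) * 2 ^ (k + n).
Proof.
  intros. rewrite <- !mult_INR. rewrite <- (INR_IZR_INZ 2) || idtac.
  replace (2 ^ (k+n)) with (INR (2 ^ (k+n))).
  - rewrite <- mult_INR. apply le_INR, fact_binom_nat.
  - rewrite pow_INR. reflexivity.
Qed.

Lemma sum_nonneg_ge_term : forall (a : nat -> R), (forall k, 0 <= a k) ->
  forall n, a n <= sum_n a n.
Proof.
  intros a Ha n. destruct n. rewrite sum_O. lra.
  rewrite sum_Sn. assert (0 <= sum_n a n).
  { induction n. rewrite sum_O. apply Ha. rewrite sum_Sn. unfold plus; simpl. specialize (Ha (S n)). lra. }
  unfold plus; simpl. lra.
Qed.

Lemma series_term_le : forall (a : nat -> R) l, (forall k, 0 <= a k) -> is_series a l ->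
  forall n, a n <= l.
Proof.
  intros a l Ha Hs n. eapply Rle_trans. apply (sum_nonneg_ge_term a Ha n).
  apply is_lim_seq_incr_compare. exact Hs.
  intros m. rewrite sum_Sn. unfold plus; simpl. specialize (Ha (S m)). lra.
Qed.

Lemma series_abs_bound : forall (u : nat -> R) c q, 0 <= q < 1 ->
  (forall k, Rabs (u k) <= c * q ^ k) -> Rabs (Series u) <= c / (1 - q).
Proof.
  intros u c q Hq Hu.
  assert (Hg : is_series (fun k => c * q ^ k) (c * / (1 - q))).
  { apply (is_series_scal_l c (fun k => q^k)). apply is_series_geom. rewrite Rabs_pos_eq; lra. }
  assert (Hex : ex_series (fun k => Rabs (u k))).
  { apply (@ex_series_le R_AbsRing R_CompleteNormedModule _ (fun k => c * q ^ k)). intros k.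
    change (norm (Rabs (u k))) with (Rabs (Rabs (u k))). rewrite Rabs_Rabsolu. apply Hu. eexists; exact Hg. }
  eapply Rle_trans. apply Series_Rabs. exact Hex.
  unfold Rdiv. rewrite <- (is_series_unique _ _ Hg).
  apply Series_le. intros k. split. apply Rabs_pos. apply Hu. eexists; exact Hg.
Qed.

Lemma prodn_const1 : forall n, prodn (fun _ => Rabs 1) n = 1.
Proof. induction n; simpl; auto. rewrite IHn, Rabs_R1. ring. Qed.

Lemma ml_power (A : nat -> (nat -> R) -> R) :
  (forall n hs hs', (forall i, (i < n)%nat -> hs i = hs' i) -> A n hs = A n hs') ->
  (forall n i hs x y a, (i < n)%nat -> (forall j : nat, True) -> True -> True ->
        A n (upd hs i (Rplus x y)) = A n (upd hs i x) + A n (upd hs i y) /\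
        A n (upd hs i (Rmult a x)) = a * A n (upd hs i x)) ->
  forall n h, A n (fun _ => h) = h ^ n * A n (fun _ => 1).
Proof.
  intros Hdep Hml n h.
  assert (Hk : forall k, (k <= n)%nat ->
    A n (fun j => if Nat.ltb j k then h else 1) = h ^ k * A n (fun _ => 1)).
  { induction k as [|k IH]; intros Hkn.
    - simpl. rewrite Rmult_1_l. apply Hdep. intros i _. destruct i; reflexivity.
    - rewrite (Hdep n _ (upd (fun j => if Nat.ltb j k then h else 1) k (Rmult h 1))).
      + destruct (Hml n k (fun j => if Nat.ltb j k then h else 1) 1 1 h) as [_ H2];
          auto; try lia.
        rewrite H2.
        rewrite (Hdep n _ (fun j => if Nat.ltb j k then h else 1)).
        * rewrite IH by lia. simpl. ring.
        * intros i _. unfold upd. destruct (Nat.eqb i k) eqn:E; auto.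
          apply Nat.eqb_eq in E; subst. rewrite Nat.ltb_irrefl. reflexivity.
      + intros i _. unfold upd. destruct (Nat.eqb i k) eqn:E.
        * apply Nat.eqb_eq in E; subst. 
          assert (Nat.ltb k (S k) = true) by (apply Nat.ltb_lt; lia). rewrite H. ring.
        * apply Nat.eqb_neq in E.
          destruct (Nat.ltb i k) eqn:E1.
          -- apply Nat.ltb_lt in E1. assert (Nat.ltb i (S k) = true) by (apply Nat.ltb_lt; lia).
             rewrite H; reflexivity.
          -- apply Nat.ltb_ge in E1. assert (Nat.ltb i (S k) = false) by (apply Nat.ltb_ge; lia).
             rewrite H; reflexivity. }
  rewrite <- (Hk n (le_n n)). apply Hdep. intros i Hi.
  apply Nat.ltb_lt in Hi. rewrite Hi. reflexivity.
Qed.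

Section Analytic1D.
Variable V : R -> R.
Hypothesis Han : analytic_on (fun _ => True) Rplus Rmult Rabs V.

Lemma an_local : forall t, exists (a : nat -> R) r M, 0 < r /\ 0 <= M /\
  (forall n, Rabs (a n) * r ^ n <= M) /\
  (forall h, Rabs h < r -> is_series (fun n => a n * h ^ n) (V (t + h))).
Proof.
  intros t. destruct (Han t I) as (A & C & r & Hr & Hdep & Hml & Hbd & HC & Hex & Hser).
  exists (fun n => A n (fun _ => 1)), r, (Series (fun n => C n * r ^ n)).
  assert (Hterm : forall n, Rabs (A n (fun _ => 1)) * r ^ n <= Series (fun n => C n * r ^ n)).
  { intros n. eapply Rle_trans.
    2: { apply (series_term_le (fun n => C n * r ^ n)).
         intros k. apply Rmult_le_pos. apply HC. apply pow_le; lra.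
         apply Series_correct, Hex. }
    apply Rmult_le_compat_r. apply pow_le; lra.
    specialize (Hbd n (fun _ => 1) (fun _ => I)). rewrite prodn_const1, Rmult_1_r in Hbd. exact Hbd. }
  split; [exact Hr|]. split.
  { eapply Rle_trans; [|apply (Hterm O)]. apply Rmult_le_pos. apply Rabs_pos. simpl; lra. }
  split; [exact Hterm|].
  intros h Hh. apply (is_series_ext (fun n => A n (fun _ => h))).
  - intros n. simpl. rewrite (ml_power A Hdep Hml). ring.
  - apply Hser. exact I. exact Hh.
Qed.

End Analytic1D.

Lemma locally_R : forall (y : R) (P : R -> Prop) eps, 0 < eps ->
  (forall z, Rabs (z - y) < eps -> P z) -> locally y P.
Proof.
  intros y P eps He H. exists (mkposreal eps He). intros z Hz. apply H.
  exact Hz.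
Qed.

Lemma psd_bound : forall a r M n z, 0 < r -> 0 <= M -> (forall m, Rabs (a m) * r ^ m <= M) ->
  Rabs z <= r / 4 ->
  Rabs (PSeries (PS_derive_n n a) z) <= 2 * M * INR (Factorial.fact n) * (2 / r) ^ n.
Proof.
  intros a r M n z Hr HM Ha Hz.
  unfold PSeries.
  replace (2 * M * INR (Factorial.fact n) * (2 / r) ^ n) with
    ((M * INR (Factorial.fact n) * (2 / r) ^ n) / (1 - /2)) by field.
  apply series_abs_bound. lra.
  intros k. unfold PS_derive_n.
  assert (Hrk : 0 < r ^ (k + n)) by (apply pow_lt; lra).
  assert (Hak : Rabs (a (k + n)%nat) <= M / r ^ (k + n)).
  { apply (Rmult_le_reg_r (r ^ (k+n))). exact Hrk. unfold Rdiv. rewrite Rmult_assoc, Rinv_l, Rmult_1_r by lra. apply Ha. }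
  assert (Hf := fact_binom k n).
  assert (Hfk : 0 < INR (Factorial.fact k)) by apply INR_fact_lt_0.
  assert (Hfn : 0 < INR (Factorial.fact n)) by apply INR_fact_lt_0.
  assert (Hzk : Rabs z ^ k <= (r / 4) ^ k) by (apply pow_incr; split; [apply Rabs_pos|exact Hz]).
  rewrite !Rabs_mult, <- RPow_abs.
  rewrite (Rabs_pos_eq (INR _ / INR _)).
  2: { apply Rmult_le_pos. apply pos_INR. apply Rlt_le, Rinv_0_lt_compat, Hfk. }
  apply Rle_trans with ((INR (Factorial.fact k) * INR (Factorial.fact n) * 2 ^ (k + n)) / INR (Factorial.fact k)
     * (M / r ^ (k + n)) * (r / 4) ^ k).
  { apply Rmult_le_compat. apply Rmult_le_pos. apply Rmult_le_pos. apply pos_INR.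
    apply Rlt_le, Rinv_0_lt_compat, Hfk. apply Rabs_pos. apply pow_le, Rabs_pos.
    apply Rmult_le_compat. apply Rmult_le_pos. apply pos_INR.
    apply Rlt_le, Rinv_0_lt_compat, Hfk. apply Rabs_pos.
    apply Rmult_le_compat_r. apply Rlt_le, Rinv_0_lt_compat, Hfk. exact Hf. exact Hak. exact Hzk. }
  right. rewrite !pow_add. unfold Rdiv. rewrite !Rpow_mult_distr, !pow_inv.
  replace (4 ^ k) with (2 ^ k * 2 ^ k) by (rewrite <- Rpow_mult_distr; f_equal; ring).
  assert (0 < 2 ^ k) by (apply pow_lt; lra).
  assert (0 < 2 ^ n) by (apply pow_lt; lra).
  assert (0 < r ^ k) by (apply pow_lt; lra).
  assert (0 < r ^ n) by (apply pow_lt; lra).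
  field. repeat split; lra.
Qed.

Section Analytic1D_b.
Variable V : R -> R.
Hypothesis Han : analytic_on (fun _ => True) Rplus Rmult Rabs V.

Lemma an_deriv_local : forall t, exists r M, 0 < r /\ 0 <= M /\ forall y, Rabs (y - t) < r / 4 ->
  (forall n, ex_derive (Derive_n V n) y) /\
  (forall n, Rabs (Derive_n V n y) <= 2 * M * INR (Factorial.fact n) * (2 / r) ^ n).
Proof.
  intros t. destruct (an_local V Han t) as (a & r & M & Hr & HM & Ha & Hs).
  exists r, M. split; [exact Hr|]. split; [exact HM|].
  assert (Hrad : Rbar_le r (CV_radius a)).
  { destruct (CV_radius_bounded a) as [Hub _]. apply Hub. exists M. intros n.
    rewrite Rabs_mult, <- RPow_abs, (Rabs_pos_eq r) by lra. apply Ha. }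
  assert (Hloc : forall z, Rabs (z - t) < r -> V z = PSeries a (z - t)).
  { intros z Hz. unfold PSeries. symmetry. rewrite (is_series_unique _ _ (Hs _ Hz)). f_equal; ring. }
  assert (HD : forall n z, Rabs (z - t) < r -> Derive_n V n z = PSeries (PS_derive_n n a) (z - t)).
  { intros n z Hz. rewrite (Derive_n_ext_loc V (fun z => PSeries a (z - t))).
    - unfold Rminus. etransitivity; [apply (Derive_n_comp_trans (PSeries a) n z (- t))|].
      apply Derive_n_PSeries. eapply Rbar_lt_le_trans; [|exact Hrad]. simpl. exact Hz.
    - apply (locally_R z _ (r - Rabs (z - t))). lra.
      intros z' Hz'. apply Hloc.
      replace (z' - t) with ((z' - z) + (z - t)) by ring.
      eapply Rle_lt_trans. apply Rabs_triang. lra. }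
  intros y Hy. split.
  - intros n. apply (ex_derive_ext_loc (fun z => PSeries (PS_derive_n n a) (z - t))).
    + apply (locally_R y _ (r - Rabs (y - t))). lra.
      intros z' Hz'. symmetry. apply HD.
      replace (z' - t) with ((z' - y) + (y - t)) by ring.
      eapply Rle_lt_trans. apply Rabs_triang. lra.
    + apply (ex_derive_comp (PSeries (PS_derive_n n a)) (fun z => z - t)).
      * apply ex_derive_PSeries. rewrite CV_radius_derive_n.
        eapply Rbar_lt_le_trans; [|exact Hrad]. simpl. lra.
      * apply @ex_derive_minus. apply ex_derive_id. apply ex_derive_const.
  - intros n. rewrite HD by lra. apply psd_bound; auto. lra.
Qed.

End Analytic1D_b.

Section Analytic1D_c.
Variable V : R -> R.
Hypothesis Han : analytic_on (fun _ => True) Rplus Rmult Rabs V.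

Lemma an_smooth : forall n y, ex_derive (Derive_n V n) y.
Proof.
  intros n y. destruct (an_deriv_local V Han y) as (r & M & Hr & HM & H).
  apply (H y). replace (y - y) with 0 by ring. rewrite Rabs_R0. lra.
Qed.

Lemma an_uniform : forall m M', exists B K, 0 < B /\ 0 < K /\
  forall y, m <= y <= M' -> forall n, Rabs (Derive_n V n y) <= B * K ^ n * INR (Factorial.fact n).
Proof.
  intros m M'.
  assert (Hc : forall t, {p : R * R | 0 < fst p /\ 0 <= snd p /\ forall y, Rabs (y - t) < fst p / 4 ->
     forall n, Rabs (Derive_n V n y) <= 2 * snd p * INR (Factorial.fact n) * (2 / fst p) ^ n}).
  { intros t. apply constructive_indefinite_description.
    destruct (an_deriv_local V Han t) as (r & M & Hr & HM & H).
    exists (r, M). simpl. split; [exact Hr|]. split; [exact HM|]. intros y Hy. apply (H y Hy). }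
  assert (Hpos : forall t, 0 < Rmin (fst (proj1_sig (Hc t)) / 4) (/ (snd (proj1_sig (Hc t)) + 1))).
  { intros t. generalize (proj2_sig (Hc t)). destruct (proj1_sig (Hc t)) as [r M].
    simpl. intros (Hr & HM & _).
    apply Rmin_case. lra. apply Rinv_0_lt_compat. lra. }
  destruct (compactness_value_1d m M' (fun t => mkposreal _ (Hpos t))) as [d Hd].
  exists (2 / d), (/ (2 * d)). assert (Hd0 := cond_pos d).
  split. apply Rdiv_lt_0_compat; lra. split. apply Rinv_0_lt_compat; lra.
  intros y Hy n. destruct (NNPP _ (Hd y Hy)) as (t & Ht & Hyt & Hdt). simpl in Hyt, Hdt.
  revert Hyt Hdt. generalize (proj2_sig (Hc t)). destruct (proj1_sig (Hc t)) as [r M].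
  simpl. intros (Hr & HM & Hb) Hyt Hdt.
  assert (H1 : d <= r / 4) by (eapply Rle_trans; [exact Hdt| apply Rmin_l]).
  assert (H2 : d <= / (M + 1)) by (eapply Rle_trans; [exact Hdt| apply Rmin_r]).
  assert (Hy' : Rabs (y - t) < r / 4) by (eapply Rlt_le_trans; [exact Hyt| apply Rmin_l]).
  eapply Rle_trans. apply (Hb y Hy' n).
  assert (HMd : M <= / d).
  { assert (d * (M + 1) <= 1).
    { apply (Rmult_le_reg_r (/ (M+1))). apply Rinv_0_lt_compat; lra.
      rewrite Rmult_assoc, Rinv_r, Rmult_1_r, Rmult_1_l by lra. exact H2. }
    apply (Rmult_le_reg_l d). lra. rewrite Rinv_r by lra. nra. }
  assert (Hrd : 2 / r <= / (2 * d)).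
  { unfold Rdiv. apply (Rmult_le_reg_l (r * (2 * d))). nra.
    field_simplify; try lra. }
  assert (Hfn : 0 < INR (Factorial.fact n)) by apply INR_fact_lt_0.
  assert (0 <= (2 / r) ^ n) by (apply pow_le; apply Rlt_le, Rdiv_lt_0_compat; lra).
  assert ((2 / r) ^ n <= (/ (2 * d)) ^ n) by (apply pow_incr; split; [apply Rlt_le, Rdiv_lt_0_compat; lra| exact Hrd]).
  assert (2 * M <= 2 / d) by (unfold Rdiv; lra).
  apply Rle_trans with (2 / d * INR (Factorial.fact n) * (/ (2 * d)) ^ n).
  - apply Rmult_le_compat; try nra.
  - right. ring.
Qed.

End Analytic1D_c.

Lemma sum_zero_pow : forall (D : nat -> R) N,
  sum_f_R0 (fun m => 0 ^ m / INR (Factorial.fact m) * D m) N = D O.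
Proof.
  intros D N. induction N. simpl. field.
  simpl sum_f_R0. rewrite IHN. change (0 ^ S N) with (0 * 0 ^ N). unfold Rdiv. ring.
Qed.

Section Taylor.
Variable f : R -> R.
Hypothesis Hs : forall n y, ex_derive (Derive_n f n) y.
Variables B K R0 : R.
Hypothesis HK : 0 <= K.
Hypothesis HB0 : 0 <= B.
Hypothesis HB : forall y, - R0 - 1 <= y <= R0 + 1 -> forall n,
  Rabs (Derive_n f n y) <= B * K ^ n * INR (Factorial.fact n).

Lemma exdn : forall k t, ex_derive_n f k t.
Proof. intros k t. destruct k. exact I. apply Hs. Qed.

Lemma rem_bound : forall d z N, Rabs d <= 1 -> - R0 - 1 <= z <= R0 + 1 ->
  Rabs (d ^ S N / INR (Factorial.fact (S N)) * Derive_n f (S N) z) <= B * (K * Rabs d) ^ S N.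
Proof.
  intros d z N Hd Hz.
  assert (Hf : 0 < INR (Factorial.fact (S N))) by apply INR_fact_lt_0.
  rewrite !Rabs_mult. unfold Rdiv. rewrite Rabs_mult, <- RPow_abs, Rabs_inv, (Rabs_pos_eq (INR _)) by lra.
  specialize (HB z Hz (S N)).
  apply Rle_trans with (Rabs d ^ S N * / INR (Factorial.fact (S N)) * (B * K ^ S N * INR (Factorial.fact (S N)))).
  apply Rmult_le_compat_l. apply Rmult_le_pos. apply pow_le, Rabs_pos. apply Rlt_le, Rinv_0_lt_compat; lra.
  exact HB.
  right. rewrite Rpow_mult_distr. field. lra.
Qed.

Lemma taylor_bound : forall x d N, - R0 <= x <= R0 -> Rabs d <= 1 ->
  Rabs (f (x + d) - sum_f_R0 (fun m => d ^ m / INR (Factorial.fact m) * Derive_n f m x) N)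
   <= B * (K * Rabs d) ^ S N.
Proof.
  intros x d N Hx Hd.
  destruct (Rtotal_order d 0) as [Hneg | [Hz | Hpos]].
  - set (g := fun y => f (- y)).
    assert (Hg : forall k t, ex_derive_n g k t).
    { intros k t. apply ex_derive_n_comp_opp. apply filter_forall. intros; apply exdn. }
    assert (HDg : forall m t, Derive_n g m t = (-1) ^ m * Derive_n f m (- t)).
    { intros m t. apply Derive_n_comp_opp. apply filter_forall. intros; apply exdn. }
    destruct (Taylor_Lagrange g N (- x) (- x - d)) as (z & Hz & Heq). lra.
    { intros; apply Hg. }
    replace (f (x + d)) with (g (- x - d)) by (unfold g; f_equal; ring).
    rewrite Heq.
    replace (sum_f_R0 (fun m => (- x - d - - x) ^ m / INR (Factorial.fact m) * Derive_n g m (- x)) N)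
      with (sum_f_R0 (fun m => d ^ m / INR (Factorial.fact m) * Derive_n f m x) N).
    2: { apply sum_eq. intros m _. rewrite HDg, Ropp_involutive.
         replace (- x - d - - x) with ((-1) * d) by ring. rewrite Rpow_mult_distr.
         replace ((-1) ^ m * d ^ m / INR (Factorial.fact m) * ((-1) ^ m * Derive_n f m x))
           with (((-1) ^ m * (-1) ^ m) * (d ^ m / INR (Factorial.fact m) * Derive_n f m x)) by (unfold Rdiv; ring).
         rewrite <- Rpow_mult_distr. replace (-1 * -1) with 1 by ring. rewrite pow1. ring. }
    replace (sum_f_R0 (fun m => d ^ m / INR (Factorial.fact m) * Derive_n f m x) N +
      (- x - d - - x) ^ S N / INR (Factorial.fact (S N)) * Derive_n g (S N) z -
      sum_f_R0 (fun m => d ^ m / INR (Factorial.fact m) * Derive_n f m x) N)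
     with ((-1) ^ S N * ((- d) ^ S N / INR (Factorial.fact (S N)) * Derive_n f (S N) (- z))).
    2: { rewrite HDg. replace (- x - d - - x) with (- d) by ring. unfold Rdiv. ring. }
    rewrite Rabs_mult, <- RPow_abs, Rabs_m1, pow1, Rmult_1_l.
    rewrite <- (Rabs_Ropp d). apply rem_bound. rewrite Rabs_Ropp; exact Hd.
    assert (Rabs d = - d) by (apply Rabs_left; exact Hneg). lra.
  - subst d. rewrite sum_zero_pow, Rplus_0_r. simpl Derive_n.
    replace (f x - f x) with 0 by ring. rewrite Rabs_R0, Rmult_0_r. simpl. lra.
  - destruct (Taylor_Lagrange f N x (x + d)) as (z & Hz & Heq). lra.
    { intros; apply exdn. }
    rewrite Heq. replace (x + d - x) with d by ring.
    replace (sum_f_R0 (fun m => d ^ m / INR (Factorial.fact m) * Derive_n f m x) N +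
      d ^ S N / INR (Factorial.fact (S N)) * Derive_n f (S N) z -
      sum_f_R0 (fun m => d ^ m / INR (Factorial.fact m) * Derive_n f m x) N)
     with (d ^ S N / INR (Factorial.fact (S N)) * Derive_n f (S N) z) by ring.
    apply rem_bound. exact Hd.
    assert (Rabs d = d) by (apply Rabs_right; lra). lra.
Qed.

End Taylor.

Lemma Derive_n_Derive : forall f n x, Derive_n (Derive f) n x = Derive_n f (S n) x.
Proof.
  intros f n. induction n; intros x. reflexivity.
  simpl. apply Derive_ext. intros t. apply IHn.
Qed.

Lemma G_smooth V : analytic_on (fun _ => True) Rplus Rmult Rabs V ->
  forall n y, ex_derive (Derive_n (Derive V) n) y.
Proof.
  intros Han n y. apply (ex_derive_ext (Derive_n V (S n))).
  intros t. symmetry. apply Derive_n_Derive. apply an_smooth. exact Han.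
Qed.

Lemma G_uniform V : analytic_on (fun _ => True) Rplus Rmult Rabs V ->
  forall m M', exists B K, 0 < B /\ 0 < K /\
  forall y, m <= y <= M' -> forall n,
    Rabs (Derive_n (Derive V) n y) <= B * K ^ n * INR (Factorial.fact n).
Proof.
  intros Han m M'. destruct (an_uniform V Han m M') as (B & K & HB & HK & H).
  exists (B * K), (2 * K). split. nra. split. lra.
  intros y Hy n. rewrite Derive_n_Derive. eapply Rle_trans. apply H. exact Hy.
  change (Factorial.fact (S n)) with (S n * Factorial.fact n)%nat. rewrite mult_INR, Rpow_mult_distr.
  replace (K ^ S n) with (K * K ^ n) by (simpl; ring).
  assert (0 < K ^ n) by (apply pow_lt; lra).
  assert (0 < INR (Factorial.fact n)) by apply INR_fact_lt_0.
  assert (INR (S n) <= 2 ^ n).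
  { clear. induction n. simpl; lra. rewrite S_INR. change (2 ^ S n) with (2 * 2 ^ n). assert (1 <= 2 ^ n) by (apply pow_R1_Rle; lra). lra. }
  assert (0 < B * K * K ^ n * INR (Factorial.fact n)) by (repeat apply Rmult_lt_0_compat; lra).
  apply Rle_trans with (B * K * K ^ n * INR (Factorial.fact n) * INR (S n)). right; ring.
  apply Rle_trans with (B * K * K ^ n * INR (Factorial.fact n) * 2 ^ n).
  apply Rmult_le_compat_l; lra. right; ring.
Qed.

Definition clamp (s : R) : R := Rmax (-1) (Rmin 1 s).

Lemma clamp_in : forall s, -1 <= clamp s <= 1.
Proof. intros s. unfold clamp. split. apply Rmax_l. apply Rmax_lub. lra. apply Rmin_l. Qed.

Lemma clamp_id : forall s, -1 <= s <= 1 -> clamp s = s.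
Proof. intros s Hs. unfold clamp. rewrite Rmin_right by lra. rewrite Rmax_right by lra. reflexivity. Qed.

Lemma clamp_lip : forall s t, Rabs (clamp t - clamp s) <= Rabs (t - s).
Proof.
  intros s t. unfold clamp, Rmax, Rmin.
  repeat (destruct Rle_dec); unfold Rabs; repeat destruct Rcase_abs; lra.
Qed.

Definition extI (P : R -> R) : R -> R := fun s => P (clamp s).

Lemma extI_eq : forall P s, -1 <= s <= 1 -> extI P s = P s.
Proof. intros. unfold extI. rewrite clamp_id; auto. Qed.

Lemma extI_cont : forall P, cont_on_I P -> forall x, continuous (extI P) x.
Proof.
  intros P HP x. apply continuity_pt_filterlim.
  intros eps Heps. destruct (HP (clamp x) (clamp_in x) eps Heps) as (d & Hd & H).
  exists d. split. exact Hd. intros y [_ Hy]. unfold R_dist in *. unfold extI.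
  apply H. apply clamp_in. eapply Rle_lt_trans. apply clamp_lip. exact Hy.
Qed.

Lemma cont_bounded : forall P, cont_on_I P -> exists M, forall s, -1 <= s <= 1 -> Rabs (P s) <= M.
Proof.
  intros P HP. destruct (continuity_ab_maj (fun s => Rabs (extI P s)) (-1) 1) as (x & Hx & _).
  lra. intros c _. apply continuity_pt_filterlim.
  apply (continuous_comp (extI P) Rabs). apply extI_cont; auto.
  apply continuous_Rabs.
  exists (Rabs (extI P x)). intros s Hs. rewrite <- (extI_eq P s Hs). apply Hx; exact Hs.
Qed.

Lemma supI_spec : forall P, (exists M, forall s, -1 <= s <= 1 -> Rabs (P s) <= M) ->
  (forall s, -1 <= s <= 1 -> Rabs (P s) <= supI P) /\
  (forall B, (forall s, -1 <= s <= 1 -> Rabs (P s) <= B) -> supI P <= B).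
Proof.
  intros P [M HM]. unfold supI.
  destruct (Lub_Rbar_correct (fun y => exists s, -1 <= s <= 1 /\ y = Rabs (P s))) as [Hub Hlub].
  destruct (Lub_Rbar (fun y => exists s, -1 <= s <= 1 /\ y = Rabs (P s))) as [l| |] eqn:E.
  - split.
    + intros s Hs. apply (Hub (Rabs (P s))). exists s; split; auto.
    + intros B HB. apply (Hlub (Finite B)). intros y [s [Hs ->]]. apply HB; auto.
  - exfalso. assert (Rbar_le p_infty (Finite M)). apply Hlub. intros y [s [Hs ->]]. apply HM; auto.
    simpl in H; auto.
  - exfalso. assert (Rbar_le (Finite (Rabs (P 0))) m_infty). apply Hub. exists 0; split; auto; lra.
    simpl in H; auto.
Qed.

Lemma Unorm_p1 : forall U, Rabs (p1 U) <= Unorm U.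
Proof. intros. unfold Unorm. eapply Rle_trans; [|apply Rmax_l]. eapply Rle_trans; [|apply Rmax_l]. apply Rmax_l. Qed.
Lemma Unorm_p2 : forall U, Rabs (p2 U) <= Unorm U.
Proof. intros. unfold Unorm. eapply Rle_trans; [|apply Rmax_l]. eapply Rle_trans; [|apply Rmax_l]. apply Rmax_r. Qed.
Lemma Unorm_xi1 : forall U, Rabs (xi1 U) <= Unorm U.
Proof. intros. unfold Unorm. eapply Rle_trans; [|apply Rmax_l]. eapply Rle_trans; [|apply Rmax_r]. apply Rmax_l. Qed.
Lemma Unorm_xi2 : forall U, Rabs (xi2 U) <= Unorm U.
Proof. intros. unfold Unorm. eapply Rle_trans; [|apply Rmax_l]. eapply Rle_trans; [|apply Rmax_r]. apply Rmax_r. Qed.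
Lemma Unorm_nonneg : forall U, 0 <= Unorm U.
Proof. intros. eapply Rle_trans; [apply Rabs_pos|apply Unorm_p1]. Qed.

Lemma Unorm_P1 : forall U, inY U -> forall s, -1 <= s <= 1 -> Rabs (P1 U s) <= Unorm U.
Proof.
  intros U [H1 H2] s Hs. unfold Unorm. eapply Rle_trans; [|apply Rmax_r]. eapply Rle_trans; [|apply Rmax_l].
  apply (proj1 (supI_spec _ (cont_bounded _ H1))). exact Hs.
Qed.
Lemma Unorm_P2 : forall U, inY U -> forall s, -1 <= s <= 1 -> Rabs (P2 U s) <= Unorm U.
Proof.
  intros U [H1 H2] s Hs. unfold Unorm. eapply Rle_trans; [|apply Rmax_r]. eapply Rle_trans; [|apply Rmax_r].
  apply (proj1 (supI_spec _ (cont_bounded _ H2))). exact Hs.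
Qed.

Lemma supI_scal : forall P a, cont_on_I P -> supI (fun s => a * P s) <= Rabs a * supI P.
Proof.
  intros P a HP. destruct (supI_spec _ (cont_bounded _ HP)) as [H1 _].
  destruct (cont_bounded _ HP) as [M HM].
  assert (Hb : exists M', forall s, -1 <= s <= 1 -> Rabs (a * P s) <= M').
  { exists (Rabs a * M). intros s Hs. rewrite Rabs_mult. apply Rmult_le_compat_l. apply Rabs_pos. apply HM; auto. }
  apply (proj2 (supI_spec (fun s => a * P s) Hb)).
  intros s Hs. rewrite Rabs_mult. apply Rmult_le_compat_l. apply Rabs_pos. apply H1; auto.
Qed.

Lemma Unorm_scal : forall U a, inY U -> Unorm (Uscal a U) <= Rabs a * Unorm U.
Proof.
  intros U a [H1 H2]. unfold Unorm at 1. simpl.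
  assert (Ha := Rabs_pos a).
  repeat apply Rmax_lub; try rewrite Rabs_mult; try apply Rmult_le_compat_l; auto.
  apply Unorm_p1. apply Unorm_p2. apply Unorm_xi1. apply Unorm_xi2.
  - eapply Rle_trans. apply supI_scal; auto. apply Rmult_le_compat_l; auto.
    unfold Unorm. eapply Rle_trans; [|apply Rmax_r]. apply Rmax_l.
  - eapply Rle_trans. apply supI_scal; auto. apply Rmult_le_compat_l; auto.
    unfold Unorm. eapply Rle_trans; [|apply Rmax_r]. apply Rmax_r.
Qed.

Lemma inY_add : forall U V, inY U -> inY V -> inY (Uadd U V).
Proof.
  intros U V [A1 A2] [B1 B2]. split; simpl; intros s Hs eps He.
  - destruct (A1 s Hs (eps/2)) as (d1 & Hd1 & K1). lra. destruct (B1 s Hs (eps/2)) as (d2 & Hd2 & K2). lra.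
    exists (Rmin d1 d2). split. apply Rmin_case; lra. intros t Ht Hts.
    assert (Hts1 : Rabs (t - s) < d1) by (eapply Rlt_le_trans; [exact Hts|apply Rmin_l]).
    assert (Hts2 : Rabs (t - s) < d2) by (eapply Rlt_le_trans; [exact Hts|apply Rmin_r]).
    specialize (K1 t Ht Hts1). specialize (K2 t Ht Hts2).
    replace (P1 U t + P1 V t - (P1 U s + P1 V s)) with ((P1 U t - P1 U s) + (P1 V t - P1 V s)) by ring.
    eapply Rle_lt_trans. apply Rabs_triang. lra.
  - destruct (A2 s Hs (eps/2)) as (d1 & Hd1 & K1). lra. destruct (B2 s Hs (eps/2)) as (d2 & Hd2 & K2). lra.
    exists (Rmin d1 d2). split. apply Rmin_case; lra. intros t Ht Hts.
    assert (Hts1 : Rabs (t - s) < d1) by (eapply Rlt_le_trans; [exact Hts|apply Rmin_l]).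
    assert (Hts2 : Rabs (t - s) < d2) by (eapply Rlt_le_trans; [exact Hts|apply Rmin_r]).
    specialize (K1 t Ht Hts1). specialize (K2 t Ht Hts2).
    replace (P2 U t + P2 V t - (P2 U s + P2 V s)) with ((P2 U t - P2 U s) + (P2 V t - P2 V s)) by ring.
    eapply Rle_lt_trans. apply Rabs_triang. lra.
Qed.

Lemma cont_on_I_scal : forall P a, cont_on_I P -> cont_on_I (fun s => a * P s).
Proof.
  intros P a HP s Hs eps He. destruct (HP s Hs (eps / (Rabs a + 1))) as (d & Hd & K).
  apply Rdiv_lt_0_compat. lra. assert (0 <= Rabs a) by apply Rabs_pos. lra.
  exists d. split; auto. intros t Ht Hts. specialize (K t Ht Hts).
  replace (a * P t - a * P s) with (a * (P t - P s)) by ring. rewrite Rabs_mult.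
  assert (0 <= Rabs a) by apply Rabs_pos.
  apply Rle_lt_trans with (Rabs a * (eps / (Rabs a + 1))).
  apply Rmult_le_compat_l; lra.
  apply Rlt_le_trans with ((Rabs a + 1) * (eps / (Rabs a + 1))). apply Rmult_lt_compat_r.
  apply Rdiv_lt_0_compat; lra. lra. right. field. lra.
Qed.

Lemma inY_scal : forall U a, inY U -> inY (Uscal a U).
Proof. intros U a [A1 A2]. split; simpl; apply cont_on_I_scal; auto. Qed.

Lemma inX_add : forall U V, inX U -> inX V -> inX (Uadd U V).
Proof. intros U V [A [A1 A2]] [B [B1 B2]]. split. apply inY_add; auto. simpl. split; congruence. Qed.
Lemma inX_scal : forall U a, inX U -> inX (Uscal a U).
Proof. intros U a [A [A1 A2]]. split. apply inY_scal; auto. simpl. split; congruence. Qed.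

Definition CE (f : R -> R) : Prop :=
  exists g : R -> R, (forall x, continuous g x) /\ forall s, -1 <= s <= 0 -> f s = g s.

Lemma CE_ex_RInt : forall f, CE f -> ex_RInt f (-1) 0.
Proof.
  intros f [g [Hg Hfg]]. apply (ex_RInt_ext g). intros x Hx.
  rewrite Rmin_left, Rmax_right in Hx by lra. symmetry; apply Hfg; lra.
  apply (@ex_RInt_continuous R_CompleteNormedModule). intros; apply Hg.
Qed.

Lemma CE_plus : forall f g, CE f -> CE g -> CE (fun s => f s + g s).
Proof.
  intros f g [f' [Hf Ef]] [g' [Hg Eg]]. exists (fun s => f' s + g' s). split.
  intros x. apply (continuous_plus f' g'); auto. intros s Hs. rewrite Ef, Eg; auto.
Qed.
Lemma CE_mult : forall f g, CE f -> CE g -> CE (fun s => f s * g s).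
Proof.
  intros f g [f' [Hf Ef]] [g' [Hg Eg]]. exists (fun s => f' s * g' s). split.
  intros x. apply (continuous_mult f' g'); auto. intros s Hs. rewrite Ef, Eg; auto.
Qed.
Lemma CE_const : forall a, CE (fun _ => a).
Proof. intros a. exists (fun _ => a). split. intros; apply continuous_const. auto. Qed.
Lemma CE_opp : forall f, CE f -> CE (fun s => - f s).
Proof.
  intros f [f' [Hf Ef]]. exists (fun s => - f' s). split.
  intros x. apply (continuous_opp f'); auto. intros s Hs. rewrite Ef; auto.
Qed.
Lemma CE_minus : forall f g, CE f -> CE g -> CE (fun s => f s - g s).
Proof. intros. apply (CE_plus f (fun s => - g s)); auto. apply CE_opp; auto. Qed.
Lemma CE_comp : forall h f, (forall x, continuous h x) -> CE f -> CE (fun s => h (f s)).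
Proof.
  intros h f Hh [f' [Hf Ef]]. exists (fun s => h (f' s)). split.
  intros x. apply (continuous_comp f' h); auto. intros s Hs. rewrite Ef; auto.
Qed.
Lemma CE_ext : forall f g, CE f -> (forall s, -1 <= s <= 0 -> f s = g s) -> CE g.
Proof.
  intros f g [f' [Hf Ef]] E. exists f'. split; auto. intros s Hs. rewrite <- E; auto.
Qed.
Lemma CE_P : forall P, cont_on_I P -> CE P.
Proof.
  intros P HP. exists (extI P). split. apply extI_cont; auto. intros s Hs. rewrite extI_eq; auto. lra.
Qed.
Lemma CE_Ps : forall P, cont_on_I P -> CE (fun s => P (s + 1)).
Proof.
  intros P HP. exists (fun s => extI P (s + 1)). split.
  intros x. apply (continuous_comp (fun s => s + 1) (extI P)).
  apply (continuous_plus (fun s => s) (fun _ => 1)). apply continuous_id. apply continuous_const.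
  apply extI_cont; auto. intros s Hs. rewrite extI_eq; auto. lra.
Qed.
Lemma CE_prodn : forall (F : nat -> R -> R) n, (forall j, CE (F j)) -> CE (fun s => prodn (fun j => F j s) n).
Proof.
  intros F n HF. induction n. simpl. apply CE_const.
  simpl. apply (CE_mult (fun s => prodn (fun j => F j s) n) (F n)); auto.
Qed.

Lemma RInt_bound : forall f M, ex_RInt f (-1) 0 -> (forall s, -1 <= s <= 0 -> Rabs (f s) <= M) ->
  Rabs (RInt f (-1) 0) <= M.
Proof.
  intros f M Hf HM. assert (RInt (fun _ => M) (-1) 0 = M).
  { rewrite RInt_const. unfold scal; simpl; unfold mult; simpl. ring. }
  assert (RInt (fun _ => - M) (-1) 0 = - M).
  { rewrite RInt_const. unfold scal; simpl; unfold mult; simpl. ring. }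
  apply Rabs_le. split.
  - rewrite <- H0. apply RInt_le. lra. apply ex_RInt_const. exact Hf.
    intros x Hx. assert (Hx' : -1 <= x <= 0) by lra. specialize (HM x Hx'). apply Rabs_le_between in HM. lra.
  - rewrite <- H. apply RInt_le. lra. exact Hf. apply ex_RInt_const.
    intros x Hx. assert (Hx' : -1 <= x <= 0) by lra. specialize (HM x Hx'). apply Rabs_le_between in HM. lra.
Qed.

Definition XU (U : UX) (s : R) : R := P2 U (s + 1) - P1 U s.
Definition YU (U : UX) (s : R) : R := P1 U (s + 1) - P2 U s.

Lemma CE_XU : forall U, inY U -> CE (XU U).
Proof. intros U [H1 H2]. unfold XU. apply (CE_minus (fun s => P2 U (s + 1)) (P1 U)). apply CE_Ps; auto. apply CE_P; auto. Qed.
Lemma CE_YU : forall U, inY U -> CE (YU U).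
Proof. intros U [H1 H2]. unfold YU. apply (CE_minus (fun s => P1 U (s + 1)) (P2 U)). apply CE_Ps; auto. apply CE_P; auto. Qed.

Lemma XU_bound : forall U, inY U -> forall s, -1 <= s <= 0 -> Rabs (XU U s) <= 2 * Unorm U.
Proof.
  intros U HU s Hs. unfold XU. unfold Rminus. eapply Rle_trans. apply Rabs_triang.
  rewrite Rabs_Ropp.
  assert (Rabs (P2 U (s + 1)) <= Unorm U) by (apply Unorm_P2; auto; lra).
  assert (Rabs (P1 U s) <= Unorm U) by (apply Unorm_P1; auto; lra). lra.
Qed.
Lemma YU_bound : forall U, inY U -> forall s, -1 <= s <= 0 -> Rabs (YU U s) <= 2 * Unorm U.
Proof.
  intros U HU s Hs. unfold YU. unfold Rminus. eapply Rle_trans. apply Rabs_triang.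
  rewrite Rabs_Ropp.
  assert (Rabs (P1 U (s + 1)) <= Unorm U) by (apply Unorm_P1; auto; lra).
  assert (Rabs (P2 U s) <= Unorm U) by (apply Unorm_P2; auto; lra). lra.
Qed.

Lemma RInt_plusR : forall f g a b, ex_RInt f a b -> ex_RInt g a b ->
  RInt (fun x => f x + g x) a b = RInt f a b + RInt g a b.
Proof. intros. apply (RInt_plus f g); auto. Qed.
Lemma RInt_minusR : forall f g a b, ex_RInt f a b -> ex_RInt g a b ->
  RInt (fun x => f x - g x) a b = RInt f a b - RInt g a b.
Proof. intros. apply (RInt_minus f g); auto. Qed.
Lemma RInt_scalR : forall f k a b, ex_RInt f a b ->
  RInt (fun x => k * f x) a b = k * RInt f a b.
Proof. intros. apply (RInt_scal f a b k); auto. Qed.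

Lemma prodn_const : forall x n, prodn (fun _ => x) n = x ^ n.
Proof. intros x n. induction n; simpl; auto. rewrite IHn. ring. Qed.

Lemma lim_by_geom : forall (u : nat -> R) l C q, 0 <= q < 1 ->
  (forall N, Rabs (u N - l) <= C * q ^ N) -> is_lim_seq u l.
Proof.
  intros u l C q Hq H.
  assert (Hg : is_lim_seq (fun N => C * q ^ N) 0).
  { replace (Finite 0) with (Rbar_mult C 0) by (simpl; f_equal; ring).
    apply is_lim_seq_scal_l. apply is_lim_seq_geom. rewrite Rabs_pos_eq; lra. }
  apply (is_lim_seq_le_le (fun N => l - C * q ^ N) u (fun N => l + C * q ^ N)).
  - intros N. specialize (H N). apply Rabs_le_between in H. lra.
  - replace (Finite l) with (Finite (l - 0)) by (f_equal; ring).
    apply is_lim_seq_minus'. apply is_lim_seq_const. exact Hg.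
  - replace (Finite l) with (Finite (l + 0)) by (f_equal; ring).
    apply is_lim_seq_plus'. apply is_lim_seq_const. exact Hg.
Qed.

Lemma is_series_by_geom : forall (a : nat -> R) l C q, 0 <= q < 1 ->
  (forall N, Rabs (sum_n a N - l) <= C * q ^ N) -> is_series a l.
Proof. intros. apply (lim_by_geom (sum_n a) l C q); auto. Qed.

Lemma RInt_sum_n : forall (F : nat -> R -> R) N, (forall n, CE (F n)) ->
  sum_n (fun n => RInt (F n) (-1) 0) N = RInt (fun s => sum_f_R0 (fun n => F n s) N) (-1) 0.
Proof.
  intros F N HF. induction N.
  - rewrite sum_O. simpl. reflexivity.
  - rewrite sum_Sn, IHN. simpl sum_f_R0. rewrite RInt_plusR. reflexivity.
    apply CE_ex_RInt. clear IHN. induction N. simpl. apply HF. simpl.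
    apply (CE_plus (fun s => sum_f_R0 (fun n => F n s) N) (F (S N))); auto.
    apply CE_ex_RInt, HF.
Qed.

Lemma CE_sum : forall (F : nat -> R -> R) N, (forall n, CE (F n)) -> CE (fun s => sum_f_R0 (fun n => F n s) N).
Proof.
  intros F N HF. induction N. simpl. apply HF. simpl.
  apply (CE_plus (fun s => sum_f_R0 (fun n => F n s) N) (F (S N))); auto.
Qed.

Section Channel.
Variable G : R -> R.
Hypothesis Gs : forall n y, ex_derive (Derive_n G n) y.
Variables B K R0 : R.
Hypothesis HB0 : 0 < B.
Hypothesis HK0 : 0 < K.
Hypothesis HB : forall y, - R0 - 1 <= y <= R0 + 1 -> forall n,
  Rabs (Derive_n G n y) <= B * K ^ n * INR (Factorial.fact n).
Variable x0 : R -> R.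
Hypothesis Hx0 : CE x0.
Hypothesis Hx0b : forall s, -1 <= s <= 0 -> Rabs (x0 s) <= R0.

Definition gco (n : nat) (s : R) : R := Derive_n G n (x0 s) / INR (Factorial.fact n).

Lemma G_cont : forall n x, continuous (Derive_n G n) x.
Proof. intros. apply (@ex_derive_continuous R_AbsRing R_NormedModule), Gs. Qed.

Lemma CE_gco : forall n, CE (gco n).
Proof.
  intros n. unfold gco. apply (CE_mult (fun s => Derive_n G n (x0 s)) (fun _ => / INR (Factorial.fact n))).
  apply CE_comp; auto. apply G_cont. apply CE_const.
Qed.

Lemma gco_bound : forall n s, -1 <= s <= 0 -> Rabs (gco n s) <= B * K ^ n.
Proof.
  intros n s Hs. unfold gco. assert (Hf : 0 < INR (Factorial.fact n)) by apply INR_fact_lt_0.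
  unfold Rdiv. rewrite Rabs_mult, Rabs_inv, (Rabs_pos_eq (INR _)) by lra.
  apply (Rmult_le_reg_r (INR (Factorial.fact n))). exact Hf.
  rewrite Rmult_assoc, Rinv_l, Rmult_1_r by lra. apply HB.
  specialize (Hx0b s Hs). apply Rabs_le_between in Hx0b. lra.
Qed.

Lemma channel_series : forall d rho, CE d -> 0 <= rho <= 1 -> K * rho <= 1/2 ->
  (forall s, -1 <= s <= 0 -> Rabs (d s) <= rho) ->
  is_series (fun n => RInt (fun s => gco n s * d s ^ n) (-1) 0) (RInt (fun s => G (x0 s + d s)) (-1) 0).
Proof.
  intros d rho Hd Hrho HKr Hdb.
  apply (is_series_by_geom _ _ (B / 2) (1/2)). lra.
  intros N. rewrite RInt_sum_n.
  2: { intros n. apply CE_mult. apply CE_gco. apply (CE_ext (fun s => prodn (fun _ => d s) n)).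
       apply CE_prodn. auto. intros; apply prodn_const. }
  assert (HGc : CE (fun s => G (x0 s + d s))).
  { apply (CE_comp G (fun s => x0 s + d s)). intros x. apply (G_cont 0). apply CE_plus; auto. }
  assert (HSc : CE (fun s => sum_f_R0 (fun n => gco n s * d s ^ n) N)).
  { apply (CE_sum (fun n s => gco n s * d s ^ n)). intros n. apply CE_mult. apply CE_gco.
    apply (CE_ext (fun s => prodn (fun _ => d s) n)). apply CE_prodn. auto. intros; apply prodn_const. }
  rewrite <- RInt_minusR by (apply CE_ex_RInt; auto).
  apply RInt_bound. apply CE_ex_RInt. apply CE_minus; auto.
  intros s Hs. rewrite Rabs_minus_sym.
  replace (sum_f_R0 (fun n => gco n s * d s ^ n) N) with
    (sum_f_R0 (fun m => d s ^ m / INR (Factorial.fact m) * Derive_n G m (x0 s)) N).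
  2: { apply sum_eq. intros i _. unfold gco. unfold Rdiv. ring. }
  eapply Rle_trans. apply (taylor_bound G Gs B K R0 HB).
  specialize (Hx0b s Hs). apply Rabs_le_between in Hx0b. lra.
  specialize (Hdb s Hs). lra.
  assert (Hds : K * Rabs (d s) <= 1/2).
  { specialize (Hdb s Hs). apply Rle_trans with (K * rho); auto. apply Rmult_le_compat_l; lra. }
  apply Rle_trans with (B * (1/2) ^ S N).
  apply Rmult_le_compat_l. lra. apply pow_incr. split; auto. apply Rmult_le_pos. lra. apply Rabs_pos.
  right. simpl. field.
Qed.

End Channel.

Lemma prodn_ext : forall f g n, (forall j, (j < n)%nat -> f j = g j) -> prodn f n = prodn g n.
Proof. intros f g n H. induction n; simpl; auto. rewrite IHn, H; auto. Qed.

Lemma prodn_upd : forall {T} (f : T -> R) hs i v n, (i < n)%nat ->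
  prodn (fun j => f (upd hs i v j)) n = f v * prodn (fun j => if Nat.eqb j i then 1 else f (hs j)) n.
Proof.
  intros T f hs i v n. induction n; intros Hi. lia.
  simpl. destruct (Nat.eq_dec i n).
  - subst. unfold upd at 2. rewrite Nat.eqb_refl.
    rewrite (prodn_ext (fun j => f (upd hs n v j)) (fun j => f (hs j))).
    rewrite (prodn_ext (fun j => if Nat.eqb j n then 1 else f (hs j)) (fun j => f (hs j))). ring.
    intros j Hj. assert (Nat.eqb j n = false) by (apply Nat.eqb_neq; lia). rewrite H; auto.
    intros j Hj. unfold upd. assert (Nat.eqb j n = false) by (apply Nat.eqb_neq; lia). rewrite H; auto.
  - rewrite IHn by lia. unfold upd at 1. assert (Nat.eqb n i = false) by (apply Nat.eqb_neq; lia).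
    rewrite H. ring.
Qed.

Lemma prodn_abs_le : forall f g n, (forall j, Rabs (f j) <= g j) -> Rabs (prodn f n) <= prodn g n.
Proof.
  intros f g n H. induction n; simpl. rewrite Rabs_R1; lra.
  rewrite Rabs_mult. apply Rmult_le_compat; auto. apply Rabs_pos. apply Rabs_pos.
Qed.

Lemma prodn_nonneg : forall g n, (forall j, 0 <= g j) -> 0 <= prodn g n.
Proof. intros g n H. induction n; simpl. lra. apply Rmult_le_pos; auto. Qed.

Lemma prodn_mono : forall f g n, (forall j, 0 <= f j <= g j) -> prodn f n <= prodn g n.
Proof.
  intros f g n H. induction n; simpl. lra. apply Rmult_le_compat; auto.
  apply prodn_nonneg. intros; apply H. apply H. apply H.
Qed.

Lemma prodn_scal : forall a f n, prodn (fun j => a * f j) n = a ^ n * prodn f n.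
Proof. intros a f n. induction n; simpl. ring. rewrite IHn. ring. Qed.

Lemma is_series_of_lim : forall (a : nat -> R) (l : R), is_lim_seq (sum_n a) l -> is_series a l.
Proof. intros a l H. exact H. Qed.

Lemma is_series_fin4 : forall a : nat -> R, (forall n, (4 <= n)%nat -> a n = 0) ->
  is_series a (a 0%nat + a 1%nat + a 2%nat + a 3%nat).
Proof.
  intros a H. apply is_series_of_lim. apply (is_lim_seq_ext_loc (fun _ => a 0%nat + a 1%nat + a 2%nat + a 3%nat)).
  - exists 3%nat. intros n Hn. induction Hn.
    + rewrite !sum_Sn, sum_O. unfold plus; simpl. ring.
    + rewrite sum_Sn, <- IHHn. rewrite (H (S m)) by lia. unfold plus; simpl. ring.
  - apply is_lim_seq_const.
Qed.

Lemma is_series_minusR : forall a b la lb, is_series a la -> is_series b lb ->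
  is_series (fun n => a n - b n) (la - lb).
Proof. intros. exact (is_series_minus a b la lb H H0). Qed.
Lemma is_series_plusR : forall a b la lb, is_series a la -> is_series b lb ->
  is_series (fun n => a n + b n) (la + lb).
Proof. intros. exact (is_series_plus a b la lb H H0). Qed.

Lemma Jw_add : forall w U V, 0 < w -> Jw w (Uadd U V) = Jw w U + Jw w V.
Proof. intros. unfold Jw; simpl. field. lra. Qed.
Lemma Jw_scal : forall w a U, 0 < w -> Jw w (Uscal a U) = a * Jw w U.
Proof. intros. unfold Jw; simpl. field. lra. Qed.
Lemma Jw_bound : forall w U, 0 < w -> Rabs (Jw w U) <= (1 + / w) * Unorm U.
Proof.
  intros w U Hw. unfold Jw. eapply Rle_trans. apply Rabs_triang.
  unfold Rdiv. rewrite Rabs_mult, Rabs_inv, (Rabs_pos_eq w) by lra.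
  assert (H1 := Unorm_xi1 U). assert (H2 := Unorm_xi2 U).
  assert (0 < / w) by (apply Rinv_0_lt_compat; lra).
  assert (Rabs (xi2 U) * / w <= Unorm U * / w) by (apply Rmult_le_compat_r; lra). nra.
Qed.

Lemma XU_add : forall U V s, XU (Uadd U V) s = XU U s + XU V s.
Proof. intros. unfold XU; simpl. ring. Qed.
Lemma YU_add : forall U V s, YU (Uadd U V) s = YU U s + YU V s.
Proof. intros. unfold YU; simpl. ring. Qed.
Lemma XU_scal : forall a U s, XU (Uscal a U) s = a * XU U s.
Proof. intros. unfold XU; simpl. ring. Qed.
Lemma YU_scal : forall a U s, YU (Uscal a U) s = a * YU U s.
Proof. intros. unfold YU; simpl. ring. Qed.

Lemma XRnorm_fst : forall x, Unorm (fst x) <= XRnorm x.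
Proof. intros. unfold XRnorm. apply Rmax_l. Qed.
Lemma XRnorm_snd : forall x, Rabs (snd x) <= XRnorm x.
Proof. intros. unfold XRnorm. apply Rmax_r. Qed.
Lemma XRnorm_nonneg : forall x, 0 <= XRnorm x.
Proof. intros. eapply Rle_trans. apply Rabs_pos. apply XRnorm_snd. Qed.

Definition Tpoly (w c0 J0 : R) (n : nat) (hs : nat -> UX * R) : R :=
  match n with
  | 0 => c0 ^ 2 * J0
  | 1 => 2 * c0 * snd (hs 0%nat) * J0 + c0 ^ 2 * Jw w (fst (hs 0%nat))
  | 2 => snd (hs 0%nat) * snd (hs 1%nat) * J0 + 2 * c0 * snd (hs 0%nat) * Jw w (fst (hs 1%nat))
  | 3 => snd (hs 0%nat) * snd (hs 1%nat) * Jw w (fst (hs 2%nat))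
  | _ => 0
  end.

Lemma T_dep : forall w c0 J0 n hs hs', (forall i, (i < n)%nat -> hs i = hs' i) ->
  Tpoly w c0 J0 n hs = Tpoly w c0 J0 n hs'.
Proof.
  intros w c0 J0 n hs hs' H. destruct n as [|[|[|[|n]]]]; simpl; auto.
  - rewrite H by lia. auto.
  - rewrite !H by lia. auto.
  - rewrite !H by lia. auto.
Qed.

Lemma T_lin : forall w c0 J0 n i hs x y a, 0 < w -> (i < n)%nat ->
  Tpoly w c0 J0 n (upd hs i (XRadd x y)) = Tpoly w c0 J0 n (upd hs i x) + Tpoly w c0 J0 n (upd hs i y) /\
  Tpoly w c0 J0 n (upd hs i (XRscal a x)) = a * Tpoly w c0 J0 n (upd hs i x).
Proof.
  intros w c0 J0 n i hs x y a Hw Hi.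
  destruct n as [|[|[|[|n]]]]; try lia;
  destruct i as [|[|[|i]]]; try lia; unfold upd; simpl;
  unfold XRadd, XRscal; simpl; rewrite ?Jw_add, ?Jw_scal by lra; split; try ring.
  all: destruct n; simpl; ring.
Qed.

Lemma T_sum : forall w c0 J0 h,
  Tpoly w c0 J0 0 (fun _ => h) + Tpoly w c0 J0 1 (fun _ => h) + Tpoly w c0 J0 2 (fun _ => h)
  + Tpoly w c0 J0 3 (fun _ => h) = (c0 + snd h) ^ 2 * (J0 + Jw w (fst h)).
Proof. intros. simpl. ring. Qed.

Lemma T_bound : forall w c0 J0 n hs, 0 < w ->
  Rabs (Tpoly w c0 J0 n hs) <=
  (c0 ^ 2 * Rabs J0 + 2 * Rabs c0 * Rabs J0 + c0 ^ 2 * (1 + / w) + Rabs J0 + 2 * Rabs c0 * (1 + / w) + (1 + / w))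
  * prodn (fun j => XRnorm (hs j)) n.
Proof.
  intros w c0 J0 n hs Hw.
  set (Lw := 1 + / w).
  assert (HLw : 0 < Lw) by (unfold Lw; assert (0 < / w) by (apply Rinv_0_lt_compat; lra); lra).
  assert (HJ : forall j, Rabs (Jw w (fst (hs j))) <= Lw * XRnorm (hs j)).
  { intros j. eapply Rle_trans. apply Jw_bound; auto. apply Rmult_le_compat_l. lra. apply XRnorm_fst. }
  assert (Hg : forall j, Rabs (snd (hs j)) <= XRnorm (hs j)) by (intros; apply XRnorm_snd).
  assert (Hn : forall j, 0 <= XRnorm (hs j)) by (intros; apply XRnorm_nonneg).
  assert (A0 := Rabs_pos J0). assert (A1 := Rabs_pos c0). assert (A2 : 0 <= c0 ^ 2) by (apply pow2_ge_0).
  assert (A3 : 0 <= c0 ^ 2 * Rabs J0) by (apply Rmult_le_pos; lra).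
  assert (A4 : 0 <= 2 * Rabs c0 * Rabs J0) by (apply Rmult_le_pos; lra).
  assert (A5 : 0 <= c0 ^ 2 * Lw) by (apply Rmult_le_pos; lra).
  assert (A6 : 0 <= 2 * Rabs c0 * Lw) by (apply Rmult_le_pos; lra).
  assert (Hc2 : Rabs (c0 ^ 2) = c0 ^ 2) by (apply Rabs_pos_eq; lra).
  assert (Hpr : forall n, 0 <= prodn (fun j => XRnorm (hs j)) n) by (intros; apply prodn_nonneg; auto).
  destruct n as [|[|[|[|n]]]].
  - cbn [Tpoly prodn]. rewrite Rabs_mult, Hc2. lra.
  - apply Rle_trans with ((2 * Rabs c0 * Rabs J0 + c0 ^ 2 * Lw) * prodn (fun j => XRnorm (hs j)) 1).
    2: { apply Rmult_le_compat_r. apply Hpr. lra. }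
    cbn [Tpoly prodn]. eapply Rle_trans. apply Rabs_triang. rewrite !Rabs_mult, Hc2, Rabs_pos_eq by lra.
    assert (Rabs c0 * Rabs J0 * Rabs (snd (hs 0%nat)) <= Rabs c0 * Rabs J0 * XRnorm (hs 0%nat)).
    { apply Rmult_le_compat_l. apply Rmult_le_pos; lra. apply Hg. }
    assert (c0 ^ 2 * Rabs (Jw w (fst (hs 0%nat))) <= c0 ^ 2 * (Lw * XRnorm (hs 0%nat))).
    { apply Rmult_le_compat_l. lra. apply HJ. }
    lra.
  - apply Rle_trans with ((Rabs J0 + 2 * Rabs c0 * Lw) * prodn (fun j => XRnorm (hs j)) 2).
    2: { apply Rmult_le_compat_r. apply Hpr. lra. }
    cbn [Tpoly prodn]. eapply Rle_trans. apply Rabs_triang. rewrite !Rabs_mult, (Rabs_pos_eq 2) by lra.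
    assert (P1 : Rabs (snd (hs 0%nat)) * Rabs (snd (hs 1%nat)) <= XRnorm (hs 0%nat) * XRnorm (hs 1%nat)).
    { apply Rmult_le_compat; auto; apply Rabs_pos. }
    assert (P2 : Rabs (snd (hs 0%nat)) * Rabs (Jw w (fst (hs 1%nat))) <= XRnorm (hs 0%nat) * (Lw * XRnorm (hs 1%nat))).
    { apply Rmult_le_compat; auto; apply Rabs_pos. }
    assert (Rabs (snd (hs 0%nat)) * Rabs (snd (hs 1%nat)) * Rabs J0 <= XRnorm (hs 0%nat) * XRnorm (hs 1%nat) * Rabs J0).
    { apply Rmult_le_compat_r; auto. }
    assert (2 * Rabs c0 * (Rabs (snd (hs 0%nat)) * Rabs (Jw w (fst (hs 1%nat)))) <= 2 * Rabs c0 * (XRnorm (hs 0%nat) * (Lw * XRnorm (hs 1%nat)))).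
    { apply Rmult_le_compat_l; auto. lra. }
    lra.
  - apply Rle_trans with (Lw * prodn (fun j => XRnorm (hs j)) 3).
    2: { apply Rmult_le_compat_r. apply Hpr. lra. }
    cbn [Tpoly prodn]. rewrite !Rabs_mult.
    assert (P1 : Rabs (snd (hs 0%nat)) * Rabs (snd (hs 1%nat)) <= XRnorm (hs 0%nat) * XRnorm (hs 1%nat)).
    { apply Rmult_le_compat; auto; apply Rabs_pos. }
    assert (Rabs (snd (hs 0%nat)) * Rabs (snd (hs 1%nat)) * Rabs (Jw w (fst (hs 2%nat))) <=
            XRnorm (hs 0%nat) * XRnorm (hs 1%nat) * (Lw * XRnorm (hs 2%nat))).
    { apply Rmult_le_compat; auto. apply Rmult_le_pos; apply Rabs_pos. apply Rabs_pos. }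
    lra.
  - simpl Tpoly. rewrite Rabs_R0. apply Rmult_le_pos. lra. apply Hpr.
Qed.

Definition Phin (g1 g2 : nat -> R -> R) (n : nat) (Hs : nat -> UX) : R :=
  RInt (fun s => g1 n s * prodn (fun j => XU (Hs j) s) n + g2 n s * prodn (fun j => YU (Hs j) s) n) (-1) 0.

Lemma Phin_ext : forall g1 g2 n Hs Hs', (forall j, (j < n)%nat -> Hs j = Hs' j) ->
  Phin g1 g2 n Hs = Phin g1 g2 n Hs'.
Proof.
  intros g1 g2 n Hs Hs' H. unfold Phin. apply RInt_ext. intros s _.
  rewrite (prodn_ext (fun j => XU (Hs j) s) (fun j => XU (Hs' j) s)).
  rewrite (prodn_ext (fun j => YU (Hs j) s) (fun j => YU (Hs' j) s)). reflexivity.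
  intros; rewrite H; auto. intros; rewrite H; auto.
Qed.

Lemma inY_upd : forall Hs i v, (forall j, inY (Hs j)) -> inY v -> forall j, inY (upd Hs i v j).
Proof. intros. unfold upd. destruct (Nat.eqb j i); auto. Qed.

Lemma CE_integrand : forall g1 g2 n Hs, CE (g1 n) -> CE (g2 n) -> (forall j, inY (Hs j)) ->
  CE (fun s => g1 n s * prodn (fun j => XU (Hs j) s) n + g2 n s * prodn (fun j => YU (Hs j) s) n).
Proof.
  intros g1 g2 n Hs C1 C2 HY. apply CE_plus; apply CE_mult; auto.
  apply (CE_prodn (fun j s => XU (Hs j) s)). intros; apply CE_XU; auto.
  apply (CE_prodn (fun j s => YU (Hs j) s)). intros; apply CE_YU; auto.
Qed.

Lemma CE_prod_if : forall (F : nat -> R -> R) i n, (forall j, CE (F j)) ->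
  CE (fun s => prodn (fun j => if Nat.eqb j i then 1 else F j s) n).
Proof.
  intros F i n HF. apply (CE_prodn (fun j s => if Nat.eqb j i then 1 else F j s)).
  intros j. destruct (Nat.eqb j i). apply CE_const. apply HF.
Qed.

Lemma Phin_lin : forall g1 g2 n i Hs x y a, (i < n)%nat -> (forall m, CE (g1 m)) -> (forall m, CE (g2 m)) ->
  (forall j, inY (Hs j)) -> inY x -> inY y ->
  Phin g1 g2 n (upd Hs i (Uadd x y)) = Phin g1 g2 n (upd Hs i x) + Phin g1 g2 n (upd Hs i y) /\
  Phin g1 g2 n (upd Hs i (Uscal a x)) = a * Phin g1 g2 n (upd Hs i x).
Proof.
  intros g1 g2 n i Hs x y a Hi C1 C2 HY Hx Hy.
  set (PX := fun s => prodn (fun j => if Nat.eqb j i then 1 else XU (Hs j) s) n).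
  set (PY := fun s => prodn (fun j => if Nat.eqb j i then 1 else YU (Hs j) s) n).
  assert (EX : forall v s, prodn (fun j => XU (upd Hs i v j) s) n = XU v s * PX s).
  { intros v s. apply (prodn_upd (fun U => XU U s) Hs i v n Hi). }
  assert (EY : forall v s, prodn (fun j => YU (upd Hs i v j) s) n = YU v s * PY s).
  { intros v s. apply (prodn_upd (fun U => YU U s) Hs i v n Hi). }
  assert (CPX : CE PX) by (apply (CE_prod_if (fun j s => XU (Hs j) s)); intros; apply CE_XU; auto).
  assert (CPY : CE PY) by (apply (CE_prod_if (fun j s => YU (Hs j) s)); intros; apply CE_YU; auto).
  assert (Cv : forall v, inY v -> CE (fun s => g1 n s * (XU v s * PX s) + g2 n s * (YU v s * PY s))).
  { intros v Hv. apply CE_plus; apply CE_mult; auto; apply CE_mult; auto. apply CE_XU; auto. apply CE_YU; auto. }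
  assert (Ev : forall v, Phin g1 g2 n (upd Hs i v) =
     RInt (fun s => g1 n s * (XU v s * PX s) + g2 n s * (YU v s * PY s)) (-1) 0).
  { intros v. unfold Phin. apply RInt_ext. intros s _. rewrite EX, EY. reflexivity. }
  rewrite !Ev. split.
  - rewrite <- RInt_plusR by (apply CE_ex_RInt, Cv; auto).
    apply RInt_ext. intros s _. rewrite XU_add, YU_add. match goal with |- ?a = ?b => change (@eq R a b) end. ring.
  - rewrite <- RInt_scalR by (apply CE_ex_RInt, Cv; auto).
    apply RInt_ext. intros s _. rewrite XU_scal, YU_scal. match goal with |- ?a = ?b => change (@eq R a b) end. ring.
Qed.

Ltac reqR := match goal with |- ?a = ?b => change (@eq R a b) end.

Lemma Phin_bound : forall g1 g2 n Hs B1 K1 B2 K2, (forall m, CE (g1 m)) -> (forall m, CE (g2 m)) ->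
  (forall s, -1 <= s <= 0 -> Rabs (g1 n s) <= B1 * K1 ^ n) ->
  (forall s, -1 <= s <= 0 -> Rabs (g2 n s) <= B2 * K2 ^ n) ->
  (forall j, inY (Hs j)) ->
  Rabs (Phin g1 g2 n Hs) <= (B1 * K1 ^ n + B2 * K2 ^ n) * 2 ^ n * prodn (fun j => Unorm (Hs j)) n.
Proof.
  intros g1 g2 n Hs B1 K1 B2 K2 C1 C2 Hb1 Hb2 HY. unfold Phin.
  apply RInt_bound. apply CE_ex_RInt, CE_integrand; auto.
  intros s Hs'. eapply Rle_trans. apply Rabs_triang. rewrite !Rabs_mult.
  assert (HP : forall F : nat -> R, (forall j, Rabs (F j) <= 2 * Unorm (Hs j)) ->
     Rabs (prodn F n) <= 2 ^ n * prodn (fun j => Unorm (Hs j)) n).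
  { intros F HF. rewrite <- prodn_scal. apply prodn_abs_le. exact HF. }
  assert (HX := HP (fun j => XU (Hs j) s) (fun j => XU_bound _ (HY j) s Hs')).
  assert (HYY := HP (fun j => YU (Hs j) s) (fun j => YU_bound _ (HY j) s Hs')).
  specialize (Hb1 s Hs'). specialize (Hb2 s Hs').
  assert (0 <= 2 ^ n * prodn (fun j => Unorm (Hs j)) n).
  { apply Rmult_le_pos. apply pow_le; lra. apply prodn_nonneg. intros; apply Unorm_nonneg. }
  assert (Rabs (g1 n s) * Rabs (prodn (fun j => XU (Hs j) s) n) <= B1 * K1 ^ n * (2 ^ n * prodn (fun j => Unorm (Hs j)) n))
    by (apply Rmult_le_compat; auto; apply Rabs_pos).
  assert (Rabs (g2 n s) * Rabs (prodn (fun j => YU (Hs j) s) n) <= B2 * K2 ^ n * (2 ^ n * prodn (fun j => Unorm (Hs j)) n))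
    by (apply Rmult_le_compat; auto; apply Rabs_pos).
  lra.
Qed.

Theorem J_analytic : forall V1 V2 w, 0 < w ->
  analytic_on (fun _ => True) Rplus Rmult Rabs V1 ->
  analytic_on (fun _ => True) Rplus Rmult Rabs V2 ->
  analytic_on XRdom XRadd XRscal XRnorm (fun x => Jfun V1 V2 w (snd x) (fst x)).
Proof.
  intros V1 V2 w Hw H1 H2 [U0 c0] HU0. unfold XRdom in HU0; simpl in HU0.
  destruct HU0 as [HY0 _].
  pose (R0 := 2 * Unorm U0).
  destruct (G_uniform V1 H1 (-R0-1) (R0+1)) as (B1 & K1 & HB1 & HK1 & Hb1).
  destruct (G_uniform V2 H2 (-R0-1) (R0+1)) as (B2 & K2 & HB2 & HK2 & Hb2).
  assert (Gs1 := G_smooth V1 H1). assert (Gs2 := G_smooth V2 H2).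
  assert (Cx0 : CE (XU U0)) by (apply CE_XU; auto).
  assert (Cy0 : CE (YU U0)) by (apply CE_YU; auto).
  assert (Bx0 : forall s, -1 <= s <= 0 -> Rabs (XU U0 s) <= R0) by (intros; apply XU_bound; auto).
  assert (By0 : forall s, -1 <= s <= 0 -> Rabs (YU U0 s) <= R0) by (intros; apply YU_bound; auto).
  pose (g1 := gco (Derive V1) (XU U0)). pose (g2 := gco (Derive V2) (YU U0)).
  assert (Cg1 : forall n, CE (g1 n)) by (apply CE_gco; auto).
  assert (Cg2 : forall n, CE (g2 n)) by (apply CE_gco; auto).
  assert (Bg1 : forall n s, -1 <= s <= 0 -> Rabs (g1 n s) <= B1 * K1 ^ n).
  { intros n s Hs. apply (gco_bound (Derive V1) B1 K1 R0 Hb1 (XU U0) Bx0 n s Hs). }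
  assert (Bg2 : forall n s, -1 <= s <= 0 -> Rabs (g2 n s) <= B2 * K2 ^ n).
  { intros n s Hs. apply (gco_bound (Derive V2) B2 K2 R0 Hb2 (YU U0) By0 n s Hs). }
  pose (J0 := Jw w U0).
  pose (CT := c0 ^ 2 * Rabs J0 + 2 * Rabs c0 * Rabs J0 + c0 ^ 2 * (1 + / w) + Rabs J0 + 2 * Rabs c0 * (1 + / w) + (1 + / w)).
  assert (HCT : 0 <= CT).
  { unfold CT. assert (0 < / w) by (apply Rinv_0_lt_compat; lra).
    assert (0 <= c0 ^ 2) by apply pow2_ge_0. assert (A0 := Rabs_pos J0). assert (A1 := Rabs_pos c0).
    assert (0 <= c0 ^ 2 * Rabs J0) by (apply Rmult_le_pos; lra).
    assert (0 <= Rabs c0 * Rabs J0) by (apply Rmult_le_pos; lra).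
    assert (0 <= c0 ^ 2 * (1 + / w)) by (apply Rmult_le_pos; lra).
    assert (0 <= Rabs c0 * (1 + / w)) by (apply Rmult_le_pos; lra). lra. }
  pose (r := Rmin (1/2) (/ (4 * (K1 + K2)))).
  assert (Hr0 : 0 < r) by (unfold r; apply Rmin_case; [lra| apply Rinv_0_lt_compat; lra]).
  assert (Hr1 : r <= 1/2) by apply Rmin_l.
  assert (Hr2 : r <= / (4 * (K1 + K2))) by apply Rmin_r.
  assert (HK1r : K1 * (2 * r) <= 1/2).
  { apply Rle_trans with (K1 * (2 * / (4 * (K1 + K2)))). apply Rmult_le_compat_l; lra.
    apply (Rmult_le_reg_r (4 * (K1 + K2))). lra. field_simplify; lra. }
  assert (HK2r : K2 * (2 * r) <= 1/2).
  { apply Rle_trans with (K2 * (2 * / (4 * (K1 + K2)))). apply Rmult_le_compat_l; lra.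
    apply (Rmult_le_reg_r (4 * (K1 + K2))). lra. field_simplify; lra. }
  exists (fun n hs => Tpoly w c0 J0 n hs - Phin g1 g2 n (fun j => fst (hs j))).
  exists (fun n => CT + (B1 * K1 ^ n + B2 * K2 ^ n) * 2 ^ n).
  exists r. split; [exact Hr0|].
  split.
  { intros n hs hs' H. rewrite (T_dep w c0 J0 n hs hs' H).
    rewrite (Phin_ext g1 g2 n _ (fun j => fst (hs' j))). reflexivity.
    intros j Hj. rewrite H; auto. }
  split.
  { intros n i hs x y a Hi Hd Hx Hy.
    destruct (T_lin w c0 J0 n i hs x y a Hw Hi) as [T1 T2].
    assert (HYs : forall j, inY (fst (hs j))) by (intros j; apply (Hd j)).
    assert (E : forall v, Phin g1 g2 n (fun j => fst (upd hs i v j)) = Phin g1 g2 n (upd (fun j => fst (hs j)) i (fst v))).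
    { intros v. apply Phin_ext. intros j _. unfold upd. destruct (Nat.eqb j i); reflexivity. }
    destruct (Phin_lin g1 g2 n i (fun j => fst (hs j)) (fst x) (fst y) a Hi Cg1 Cg2 HYs (proj1 Hx) (proj1 Hy)) as [P1' P2'].
    rewrite !E, T1, T2. simpl fst. rewrite P1', P2'. split; ring. }
  split.
  { intros n hs Hd.
    assert (HYs : forall j, inY (fst (hs j))) by (intros j; apply (Hd j)).
    unfold Rminus. eapply Rle_trans. apply Rabs_triang. rewrite Rabs_Ropp.
    assert (HT := T_bound w c0 J0 n hs Hw). fold CT in HT.
    assert (HP := Phin_bound g1 g2 n (fun j => fst (hs j)) B1 K1 B2 K2 Cg1 Cg2 (Bg1 n) (Bg2 n) HYs).
    assert (HPm : prodn (fun j => Unorm (fst (hs j))) n <= prodn (fun j => XRnorm (hs j)) n).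
    { apply prodn_mono. intros j. split. apply Unorm_nonneg. apply XRnorm_fst. }
    assert (0 <= (B1 * K1 ^ n + B2 * K2 ^ n) * 2 ^ n).
    { apply Rmult_le_pos. apply Rplus_le_le_0_compat; apply Rmult_le_pos; try lra; apply pow_le; lra. apply pow_le; lra. }
    assert ((B1 * K1 ^ n + B2 * K2 ^ n) * 2 ^ n * prodn (fun j => Unorm (fst (hs j))) n <=
            (B1 * K1 ^ n + B2 * K2 ^ n) * 2 ^ n * prodn (fun j => XRnorm (hs j)) n)
      by (apply Rmult_le_compat_l; auto).
    lra. }
  split.
  { intros n. apply Rplus_le_le_0_compat. exact HCT.
    apply Rmult_le_pos. apply Rplus_le_le_0_compat; apply Rmult_le_pos; try lra; apply pow_le; lra. apply pow_le; lra. }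
  split.
  { apply (@ex_series_le R_AbsRing R_CompleteNormedModule _ (fun n => (CT + B1 + B2) * (1/2) ^ n)).
    - intros n. change (norm ?x) with (Rabs x).
      assert (0 <= (CT + (B1 * K1 ^ n + B2 * K2 ^ n) * 2 ^ n) * r ^ n).
      { apply Rmult_le_pos. apply Rplus_le_le_0_compat. exact HCT.
        apply Rmult_le_pos. apply Rplus_le_le_0_compat; apply Rmult_le_pos; try lra; apply pow_le; lra. apply pow_le; lra.
        apply pow_le; lra. }
      rewrite Rabs_pos_eq by exact H.
      replace ((CT + (B1 * K1 ^ n + B2 * K2 ^ n) * 2 ^ n) * r ^ n) with
        (CT * r ^ n + B1 * (K1 * (2 * r)) ^ n + B2 * (K2 * (2 * r)) ^ n)
        by (rewrite !Rpow_mult_distr; ring).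
      assert (r ^ n <= (1/2) ^ n) by (apply pow_incr; lra).
      assert ((K1 * (2 * r)) ^ n <= (1/2) ^ n) by (apply pow_incr; split; [apply Rmult_le_pos; lra| exact HK1r]).
      assert ((K2 * (2 * r)) ^ n <= (1/2) ^ n) by (apply pow_incr; split; [apply Rmult_le_pos; lra| exact HK2r]).
      assert (CT * r ^ n <= CT * (1/2) ^ n) by (apply Rmult_le_compat_l; lra).
      assert (B1 * (K1 * (2 * r)) ^ n <= B1 * (1/2) ^ n) by (apply Rmult_le_compat_l; lra).
      assert (B2 * (K2 * (2 * r)) ^ n <= B2 * (1/2) ^ n) by (apply Rmult_le_compat_l; lra).
      lra.
    - apply (ex_series_scal_l (CT + B1 + B2) (fun n => (1/2) ^ n)). apply ex_series_geom.
      rewrite Rabs_pos_eq; lra. }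
  intros h Hd Hh. destruct h as [H g]. unfold XRdom in Hd; simpl in Hd.
  assert (HYH : inY H) by apply Hd.
  assert (HUH : Unorm H < r) by (eapply Rle_lt_trans; [apply (XRnorm_fst (H, g))| exact Hh]).
  assert (Hrr : 0 <= 2 * r <= 1) by lra.
  assert (BX : forall s, -1 <= s <= 0 -> Rabs (XU H s) <= 2 * r).
  { intros s Hs. eapply Rle_trans. apply XU_bound; auto. lra. }
  assert (BY : forall s, -1 <= s <= 0 -> Rabs (YU H s) <= 2 * r).
  { intros s Hs. eapply Rle_trans. apply YU_bound; auto. lra. }
  assert (Hser1 := channel_series (Derive V1) Gs1 B1 K1 R0 HB1 HK1 Hb1 (XU U0) Cx0 Bx0 (XU H) (2 * r)
     (CE_XU H HYH) Hrr HK1r BX).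
  assert (Hser2 := channel_series (Derive V2) Gs2 B2 K2 R0 HB2 HK2 Hb2 (YU U0) Cy0 By0 (YU H) (2 * r)
     (CE_YU H HYH) Hrr HK2r BY).
  assert (HPs := is_series_plusR _ _ _ _ Hser1 Hser2).
  assert (HTs := is_series_fin4 (fun n => Tpoly w c0 J0 n (fun _ => (H, g)))).
  specialize (HTs ltac:(intros n Hn; destruct n as [|[|[|[|n]]]]; try lia; reflexivity)).
  cbv beta in HTs. rewrite T_sum in HTs.
  assert (Hall := is_series_minusR _ _ _ _ HTs HPs).
  assert (Cc1 : forall n, CE (fun s => g1 n s * XU H s ^ n)).
  { intros n. apply CE_mult; auto. apply (CE_ext (fun s => prodn (fun _ => XU H s) n)).
    apply (CE_prodn (fun _ s => XU H s)). intros; apply CE_XU; auto. intros; apply prodn_const. }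
  assert (Cc2 : forall n, CE (fun s => g2 n s * YU H s ^ n)).
  { intros n. apply CE_mult; auto. apply (CE_ext (fun s => prodn (fun _ => YU H s) n)).
    apply (CE_prodn (fun _ s => YU H s)). intros; apply CE_YU; auto. intros; apply prodn_const. }
  eapply is_series_ext; [|replace (Jfun V1 V2 w (snd (XRadd (U0, c0) (H, g))) (fst (XRadd (U0, c0) (H, g)))) with
     ((c0 + snd (H, g)) ^ 2 * (J0 + Jw w (fst (H, g))) -
      (RInt (fun s => Derive V1 (XU U0 s + XU H s)) (-1) 0 + RInt (fun s => Derive V2 (YU U0 s + YU H s)) (-1) 0)); [exact Hall|]].
  - intros n. simpl. f_equal. unfold Phin. rewrite <- RInt_plusR by (apply CE_ex_RInt; auto).
    apply RInt_ext. intros s _. rewrite !prodn_const. reflexivity.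
  - simpl. unfold Jfun. simpl. rewrite <- RInt_plusR.
    + f_equal. unfold J0, Jw. field. lra.
      apply RInt_ext. intros s _. unfold XU, YU. f_equal; f_equal; ring.
    + apply CE_ex_RInt. apply (CE_comp (Derive V1) (fun s => XU U0 s + XU H s)).
      intros x; apply (G_cont _ Gs1 0). apply CE_plus; auto. apply CE_XU; auto.
    + apply CE_ex_RInt. apply (CE_comp (Derive V2) (fun s => YU U0 s + YU H s)).
      intros x; apply (G_cont _ Gs2 0). apply CE_plus; auto. apply CE_YU; auto.
Qed.

Definition LJ (V1 V2 : R -> R) (w c : R) (U : UX) (h : UX) : R :=
  c ^ 2 * Jw w h - RInt (fun s => Derive_n (Derive V1) 1 (XU U s) * XU h s
                                  + Derive_n (Derive V2) 1 (YU U s) * YU h s) (-1) 0.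

Lemma Jfun_eq : forall V1 V2 w c U, Jfun V1 V2 w c U =
  c ^ 2 * Jw w U - RInt (fun s => Derive V1 (XU U s) + Derive V2 (YU U s)) (-1) 0.
Proof. reflexivity. Qed.

Lemma inY_U0 : inY U0.
Proof.
  split; intros s Hs eps He; exists 1; split; try lra; intros t _ _; simpl;
  replace (0 - 0) with 0 by ring; rewrite Rabs_R0; lra.
Qed.

Section Fderiv.
Variables V1 V2 : R -> R.
Variables w c : R.
Hypothesis Hw : 0 < w.
Hypothesis H1 : analytic_on (fun _ => True) Rplus Rmult Rabs V1.
Hypothesis H2 : analytic_on (fun _ => True) Rplus Rmult Rabs V2.

Lemma J_Fderiv : forall U, inY U -> is_Fderiv (Jfun V1 V2 w c) U (LJ V1 V2 w c U).
Proof.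
  intros U HU.
  pose (R0 := 2 * Unorm U).
  destruct (G_uniform V1 H1 (-R0-1) (R0+1)) as (B1 & K1 & HB1 & HK1 & Hb1).
  destruct (G_uniform V2 H2 (-R0-1) (R0+1)) as (B2 & K2 & HB2 & HK2 & Hb2).
  assert (Gs1 := G_smooth V1 H1). assert (Gs2 := G_smooth V2 H2).
  assert (Cx0 : CE (XU U)) by (apply CE_XU; auto).
  assert (Cy0 : CE (YU U)) by (apply CE_YU; auto).
  assert (Bx0 : forall s, -1 <= s <= 0 -> Rabs (XU U s) <= R0) by (intros; apply XU_bound; auto).
  assert (By0 : forall s, -1 <= s <= 0 -> Rabs (YU U s) <= R0) by (intros; apply YU_bound; auto).
  assert (Cd1 : CE (fun s => Derive_n (Derive V1) 1 (XU U s))) by (apply CE_comp; auto; intros; apply G_cont; auto).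
  assert (Cd2 : CE (fun s => Derive_n (Derive V2) 1 (YU U s))) by (apply CE_comp; auto; intros; apply G_cont; auto).
  assert (Cint : forall h, inY h -> CE (fun s => Derive_n (Derive V1) 1 (XU U s) * XU h s
                                  + Derive_n (Derive V2) 1 (YU U s) * YU h s)).
  { intros h Hh. apply CE_plus; apply CE_mult; auto. apply CE_XU; auto. apply CE_YU; auto. }
  assert (Bd1 : forall s, -1 <= s <= 0 -> Rabs (Derive_n (Derive V1) 1 (XU U s)) <= B1 * K1).
  { intros s Hs. eapply Rle_trans. apply Hb1. specialize (Bx0 s Hs). apply Rabs_le_between in Bx0. lra.
    simpl. lra. }
  assert (Bd2 : forall s, -1 <= s <= 0 -> Rabs (Derive_n (Derive V2) 1 (YU U s)) <= B2 * K2).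
  { intros s Hs. eapply Rle_trans. apply Hb2. specialize (By0 s Hs). apply Rabs_le_between in By0. lra.
    simpl. lra. }
  split; [split; [|split]|].
  - intros x y Hx Hy. unfold LJ. rewrite Jw_add by auto.
    rewrite (RInt_ext _ (fun s => (Derive_n (Derive V1) 1 (XU U s) * XU x s + Derive_n (Derive V2) 1 (YU U s) * YU x s)
        + (Derive_n (Derive V1) 1 (XU U s) * XU y s + Derive_n (Derive V2) 1 (YU U s) * YU y s))).
    rewrite RInt_plusR by (apply CE_ex_RInt, Cint; auto). ring.
    intros s _. rewrite XU_add, YU_add. reqR. ring.
  - intros a x Hx. unfold LJ. rewrite Jw_scal by auto.
    rewrite (RInt_ext _ (fun s => a * (Derive_n (Derive V1) 1 (XU U s) * XU x s + Derive_n (Derive V2) 1 (YU U s) * YU x s))).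
    rewrite RInt_scalR by (apply CE_ex_RInt, Cint; auto). ring.
    intros s _. rewrite XU_scal, YU_scal. reqR. ring.
  - exists (c ^ 2 * (1 + / w) + 2 * (B1 * K1 + B2 * K2)). intros h Hh. unfold LJ.
    unfold Rminus. eapply Rle_trans. apply Rabs_triang. rewrite Rabs_Ropp, Rabs_mult, (Rabs_pos_eq (c ^ 2)) by apply pow2_ge_0.
    assert (HJ := Jw_bound w h Hw).
    assert (c ^ 2 * Rabs (Jw w h) <= c ^ 2 * ((1 + / w) * Unorm h)) by (apply Rmult_le_compat_l; auto; apply pow2_ge_0).
    assert (Rabs (RInt (fun s => Derive_n (Derive V1) 1 (XU U s) * XU h s + Derive_n (Derive V2) 1 (YU U s) * YU h s) (-1) 0)
       <= 2 * (B1 * K1 + B2 * K2) * Unorm h).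
    { apply RInt_bound. apply CE_ex_RInt, Cint; auto. intros s Hs.
      eapply Rle_trans. apply Rabs_triang. rewrite !Rabs_mult.
      assert (Rabs (Derive_n (Derive V1) 1 (XU U s)) * Rabs (XU h s) <= (B1 * K1) * (2 * Unorm h))
        by (apply Rmult_le_compat; auto; try apply Rabs_pos; apply XU_bound; auto).
      assert (Rabs (Derive_n (Derive V2) 1 (YU U s)) * Rabs (YU h s) <= (B2 * K2) * (2 * Unorm h))
        by (apply Rmult_le_compat; auto; try apply Rabs_pos; apply YU_bound; auto).
      lra. }
    lra.
  - intros eps Heps.
    pose (Cq := 4 * (B1 * K1 ^ 2 + B2 * K2 ^ 2) + 1).
    assert (HCq : 0 < Cq) by (unfold Cq; assert (0 < B1 * K1 ^ 2) by (apply Rmult_lt_0_compat; [lra| apply pow_lt; lra]);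
                                        assert (0 < B2 * K2 ^ 2) by (apply Rmult_lt_0_compat; [lra| apply pow_lt; lra]); lra).
    exists (Rmin (1/2) (eps / Cq)). split. apply Rmin_case. lra. apply Rdiv_lt_0_compat; lra.
    intros h Hh Hhd.
    assert (Hh1 : Unorm h <= 1/2) by (assert (Rmin (1/2) (eps / Cq) <= 1/2) by apply Rmin_l; lra).
    assert (Hh2 : Unorm h <= eps / Cq) by (assert (Rmin (1/2) (eps / Cq) <= eps / Cq) by apply Rmin_r; lra).
    assert (HUh := inY_add U h HU Hh).
    rewrite !Jfun_eq. unfold LJ. rewrite Jw_add by auto.
    assert (CG1 : forall h', inY h' -> CE (fun s => Derive V1 (XU h' s))).
    { intros h' Hh'. apply (CE_comp (Derive V1)). intros; apply (G_cont _ Gs1 0). apply CE_XU; auto. }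
    assert (CG2 : forall h', inY h' -> CE (fun s => Derive V2 (YU h' s))).
    { intros h' Hh'. apply (CE_comp (Derive V2)). intros; apply (G_cont _ Gs2 0). apply CE_YU; auto. }
    assert (E : forall h', inY h' -> RInt (fun s => Derive V1 (XU h' s) + Derive V2 (YU h' s)) (-1) 0 =
        RInt (fun s => Derive V1 (XU h' s)) (-1) 0 + RInt (fun s => Derive V2 (YU h' s)) (-1) 0).
    { intros h' Hh'. apply RInt_plusR; apply CE_ex_RInt; auto. }
    replace (c ^ 2 * (Jw w U + Jw w h) - RInt (fun s => Derive V1 (XU (Uadd U h) s) + Derive V2 (YU (Uadd U h) s)) (-1) 0 -
       (c ^ 2 * Jw w U - RInt (fun s => Derive V1 (XU U s) + Derive V2 (YU U s)) (-1) 0) -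
       (c ^ 2 * Jw w h - RInt (fun s => Derive_n (Derive V1) 1 (XU U s) * XU h s + Derive_n (Derive V2) 1 (YU U s) * YU h s) (-1) 0))
     with (- (RInt (fun s => Derive V1 (XU (Uadd U h) s) + Derive V2 (YU (Uadd U h) s)) (-1) 0
             - RInt (fun s => Derive V1 (XU U s) + Derive V2 (YU U s)) (-1) 0
             - RInt (fun s => Derive_n (Derive V1) 1 (XU U s) * XU h s + Derive_n (Derive V2) 1 (YU U s) * YU h s) (-1) 0)) by ring.
    rewrite Rabs_Ropp.
    rewrite <- !RInt_minusR.
    2-5: apply CE_ex_RInt; repeat first [assumption | apply CE_XU | apply CE_YU | apply CG1 | apply CG2 | apply CE_minus | apply CE_plus | apply CE_mult].
    apply Rle_trans with (4 * (B1 * K1 ^ 2 + B2 * K2 ^ 2) * Unorm h * Unorm h).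
    2: { assert (0 <= Unorm h) by apply Unorm_nonneg.
         assert (4 * (B1 * K1 ^ 2 + B2 * K2 ^ 2) * Unorm h <= eps).
         { apply Rle_trans with (Cq * Unorm h). apply Rmult_le_compat_r. auto. unfold Cq; lra.
           apply (Rmult_le_reg_l (/ Cq)). apply Rinv_0_lt_compat; auto.
           rewrite <- Rmult_assoc, Rinv_l, Rmult_1_l by lra. unfold Rdiv in Hh2. lra. }
         nra. }
    apply RInt_bound. apply CE_ex_RInt, CE_minus. apply CE_minus; apply CE_plus; auto. apply Cint; auto.
    intros s Hs. cbv beta.
    rewrite XU_add, YU_add.
    assert (T1 := taylor_bound (Derive V1) Gs1 B1 K1 R0 Hb1 (XU U s) (XU h s) 1 ltac:(specialize (Bx0 s Hs); apply Rabs_le_between in Bx0; lra)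
       ltac:(assert (HX := XU_bound h Hh s Hs); lra)).
    assert (T2 := taylor_bound (Derive V2) Gs2 B2 K2 R0 Hb2 (YU U s) (YU h s) 1 ltac:(specialize (By0 s Hs); apply Rabs_le_between in By0; lra)
       ltac:(assert (HX := YU_bound h Hh s Hs); lra)).
    assert (HX := XU_bound h Hh s Hs). assert (HY := YU_bound h Hh s Hs).
    assert (E1 : (K1 * Rabs (XU h s)) ^ 2 <= K1 ^ 2 * (4 * (Unorm h * Unorm h))).
    { rewrite Rpow_mult_distr. apply Rmult_le_compat_l. apply pow_le; lra.
      simpl. rewrite Rmult_1_r. assert (0 <= Rabs (XU h s)) by apply Rabs_pos. nra. }
    assert (E2 : (K2 * Rabs (YU h s)) ^ 2 <= K2 ^ 2 * (4 * (Unorm h * Unorm h))).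
    { rewrite Rpow_mult_distr. apply Rmult_le_compat_l. apply pow_le; lra.
      simpl. rewrite Rmult_1_r. assert (0 <= Rabs (YU h s)) by apply Rabs_pos. nra. }
    replace (Derive V1 (XU U s + XU h s) + Derive V2 (YU U s + YU h s) - (Derive V1 (XU U s) + Derive V2 (YU U s)) -
      (Derive_n (Derive V1) 1 (XU U s) * XU h s + Derive_n (Derive V2) 1 (YU U s) * YU h s))
     with ((Derive V1 (XU U s + XU h s) - sum_f_R0 (fun m => XU h s ^ m / INR (Factorial.fact m) * Derive_n (Derive V1) m (XU U s)) 1)
         + (Derive V2 (YU U s + YU h s) - sum_f_R0 (fun m => YU h s ^ m / INR (Factorial.fact m) * Derive_n (Derive V2) m (YU U s)) 1)).
    2: { simpl. change (fun x : R => Derive V1 x) with (Derive V1). change (fun x : R => Derive V2 x) with (Derive V2). reqR. field. }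
    eapply Rle_trans. apply Rabs_triang.
    assert (B1 * (K1 * Rabs (XU h s)) ^ 2 <= B1 * (K1 ^ 2 * (4 * (Unorm h * Unorm h)))) by (apply Rmult_le_compat_l; lra).
    assert (B2 * (K2 * Rabs (YU h s)) ^ 2 <= B2 * (K2 ^ 2 * (4 * (Unorm h * Unorm h)))) by (apply Rmult_le_compat_l; lra).
    lra.
Qed.

End Fderiv.

Definition ext2 (P Q : R -> R) (s : R) : R := P (clamp s) + Q (clamp s) * (s - clamp s).

Lemma ext2_eq : forall P Q s, -1 <= s <= 1 -> ext2 P Q s = P s.
Proof. intros. unfold ext2. rewrite clamp_id by auto. ring. Qed.

Lemma clamp_aux : forall s t, Rabs (t - clamp t) <= Rabs (t - s) \/ clamp t = clamp s.
Proof.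
  intros s t. unfold clamp, Rmax, Rmin.
  repeat (destruct Rle_dec); try (right; lra); left; unfold Rabs; repeat destruct Rcase_abs; lra.
Qed.

Lemma ext2_deriv : forall P Q, cont_on_I Q -> deriv_on_I P Q ->
  forall s, is_derive (ext2 P Q) s (extI Q s).
Proof.
  intros P Q HQ HP s. apply is_derive_Reals. intros eps Heps.
  destruct (HP (clamp s) (clamp_in s) (eps / 4)) as (d1 & Hd1 & K1). lra.
  destruct (HQ (clamp s) (clamp_in s) (eps / 4)) as (d2 & Hd2 & K2). lra.
  assert (Hd : 0 < Rmin d1 d2) by (apply Rmin_case; lra).
  exists (mkposreal _ Hd). simpl. intros h Hh0 Hh.
  assert (Hh1 : Rabs h < d1) by (eapply Rlt_le_trans; [exact Hh| apply Rmin_l]).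
  assert (Hh2 : Rabs h < d2) by (eapply Rlt_le_trans; [exact Hh| apply Rmin_r]).
  set (t := s + h).
  assert (Hct : Rabs (clamp t - clamp s) <= Rabs h).
  { replace h with (t - s) by (unfold t; ring). apply clamp_lip. }
  assert (E : ext2 P Q t - ext2 P Q s - extI Q s * h =
     (P (clamp t) - P (clamp s) - Q (clamp s) * (clamp t - clamp s)) + (Q (clamp t) - Q (clamp s)) * (t - clamp t)).
  { unfold ext2, extI, t. ring. }
  assert (B1 : Rabs (P (clamp t) - P (clamp s) - Q (clamp s) * (clamp t - clamp s)) <= eps / 4 * Rabs h).
  { eapply Rle_trans. apply K1. apply clamp_in. lra. apply Rmult_le_compat_l. lra. exact Hct. }
  assert (B2 : Rabs ((Q (clamp t) - Q (clamp s)) * (t - clamp t)) <= eps / 4 * Rabs h).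
  { rewrite Rabs_mult. destruct (clamp_aux s t) as [Ha | Ha].
    - assert (Rabs (Q (clamp t) - Q (clamp s)) < eps / 4) by (apply K2; [apply clamp_in| lra]).
      replace (t - s) with h in Ha by (unfold t; ring).
      apply Rmult_le_compat; try apply Rabs_pos; lra.
    - rewrite Ha. replace (Q (clamp s) - Q (clamp s)) with 0 by ring. rewrite Rabs_R0, Rmult_0_l.
      apply Rmult_le_pos. lra. apply Rabs_pos. }
  assert (Hha : 0 < Rabs h) by (apply Rabs_pos_lt; auto).
  replace ((ext2 P Q t - ext2 P Q s) / h - extI Q s) with ((ext2 P Q t - ext2 P Q s - extI Q s * h) / h)
    by (field; auto).
  unfold Rdiv. rewrite Rabs_mult, Rabs_inv, E.
  apply (Rmult_lt_reg_r (Rabs h)). exact Hha. rewrite Rmult_assoc, Rinv_l, Rmult_1_r by lra.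
  eapply Rle_lt_trans. apply Rabs_triang. assert (0 < eps * Rabs h) by (apply Rmult_lt_0_compat; lra). lra.
Qed.

Lemma ext2_cont : forall P Q, cont_on_I Q -> deriv_on_I P Q -> forall s, continuous (ext2 P Q) s.
Proof.
  intros P Q HQ HP s. apply (@ex_derive_continuous R_AbsRing R_NormedModule).
  eexists. apply ext2_deriv; auto.
Qed.

Lemma is_derive_shift : forall (f : R -> R) (x l : R), is_derive f (x + 1) l -> is_derive (fun s => f (s + 1)) x l.
Proof.
  intros f x l H. replace l with (scal 1 l) by (unfold scal; simpl; unfold mult; simpl; ring).
  apply (is_derive_comp f (fun s => s + 1)). exact H.
  assert (H' : is_derive (fun s : R => s + 1) x 1) by (auto_derive; auto; ring). exact H'.
Qed.

Section FTC.
Variables V1 V2 : R -> R.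
Variables w c : R.
Hypothesis Hw : 0 < w.
Hypothesis Hc : c <> 0.
Hypothesis H1 : analytic_on (fun _ => True) Rplus Rmult Rabs V1.
Hypothesis H2 : analytic_on (fun _ => True) Rplus Rmult Rabs V2.

Lemma LJ_F : forall U Q1 Q2, inX U -> cont_on_I Q1 -> cont_on_I Q2 ->
  deriv_on_I (P1 U) Q1 -> deriv_on_I (P2 U) Q2 ->
  LJ V1 V2 w c U (Ffield V1 V2 w c U Q1 Q2) = 0.
Proof.
  intros U Q1 Q2 [HY [E1 E2]] C1 C2 D1 D2.
  assert (Gs1 := G_smooth V1 H1). assert (Gs2 := G_smooth V2 H2).
  pose (X := fun s => ext2 (P2 U) Q2 (s + 1) - ext2 (P1 U) Q1 s).
  pose (Y := fun s => ext2 (P1 U) Q1 (s + 1) - ext2 (P2 U) Q2 s).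
  pose (phi := fun s => Derive V1 (X s) + Derive V2 (Y s)).
  pose (dphi := fun s => Derive (Derive V1) (X s) * (extI Q2 (s + 1) - extI Q1 s)
                     + Derive (Derive V2) (Y s) * (extI Q1 (s + 1) - extI Q2 s)).
  assert (dX : forall s, is_derive X s (extI Q2 (s + 1) - extI Q1 s)).
  { intros s. unfold X. apply (is_derive_minus (fun s => ext2 (P2 U) Q2 (s + 1)) (ext2 (P1 U) Q1)).
    - apply (is_derive_shift (ext2 (P2 U) Q2)). apply ext2_deriv; auto.
    - apply ext2_deriv; auto. }
  assert (dY : forall s, is_derive Y s (extI Q1 (s + 1) - extI Q2 s)).
  { intros s. unfold Y. apply (is_derive_minus (fun s => ext2 (P1 U) Q1 (s + 1)) (ext2 (P2 U) Q2)).
    - apply (is_derive_shift (ext2 (P1 U) Q1)). apply ext2_deriv; auto.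
    - apply ext2_deriv; auto. }
  assert (dphi_ok : forall s, is_derive phi s (dphi s)).
  { intros s. unfold phi, dphi. apply (is_derive_plus (fun s => Derive V1 (X s)) (fun s => Derive V2 (Y s))).
    - replace (Derive (Derive V1) (X s) * (extI Q2 (s + 1) - extI Q1 s)) with
        (scal (extI Q2 (s + 1) - extI Q1 s) (Derive (Derive V1) (X s))) by (unfold scal; simpl; unfold mult; simpl; ring).
      apply (is_derive_comp (Derive V1) X). apply Derive_correct. apply (Gs1 0%nat). apply dX.
    - replace (Derive (Derive V2) (Y s) * (extI Q1 (s + 1) - extI Q2 s)) with
        (scal (extI Q1 (s + 1) - extI Q2 s) (Derive (Derive V2) (Y s))) by (unfold scal; simpl; unfold mult; simpl; ring).
      apply (is_derive_comp (Derive V2) Y). apply Derive_correct. apply (Gs2 0%nat). apply dY. }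
  assert (cX : forall s, continuous X s).
  { intros s. apply (@ex_derive_continuous R_AbsRing R_NormedModule). eexists; apply dX. }
  assert (cY : forall s, continuous Y s).
  { intros s. apply (@ex_derive_continuous R_AbsRing R_NormedModule). eexists; apply dY. }
  assert (cQ1 := extI_cont Q1 C1). assert (cQ2 := extI_cont Q2 C2).
  assert (cQs : forall Q, (forall x, continuous (extI Q) x) -> forall s, continuous (fun s => extI Q (s + 1)) s).
  { intros Q HQ s. apply (continuous_comp (fun s => s + 1) (extI Q)).
    apply (continuous_plus (fun s => s) (fun _ => 1)). apply continuous_id. apply continuous_const. apply HQ. }
  assert (cdphi : forall s, continuous dphi s).
  { intros s. unfold dphi. apply (continuous_plus (fun s => Derive (Derive V1) (X s) * (extI Q2 (s + 1) - extI Q1 s))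
      (fun s => Derive (Derive V2) (Y s) * (extI Q1 (s + 1) - extI Q2 s))).
    - apply (continuous_mult (fun s => Derive (Derive V1) (X s)) (fun s => extI Q2 (s + 1) - extI Q1 s)).
      apply (continuous_comp X (Derive (Derive V1))). auto. apply (G_cont _ Gs1 1).
      apply (continuous_minus (fun s => extI Q2 (s + 1)) (extI Q1)); auto.
    - apply (continuous_mult (fun s => Derive (Derive V2) (Y s)) (fun s => extI Q1 (s + 1) - extI Q2 s)).
      apply (continuous_comp Y (Derive (Derive V2))). auto. apply (G_cont _ Gs2 1).
      apply (continuous_minus (fun s => extI Q1 (s + 1)) (extI Q2)); auto. }
  assert (HI := is_RInt_derive phi dphi (-1) 0 (fun x _ => dphi_ok x) (fun x _ => cdphi x)).
  apply is_RInt_unique in HI.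
  unfold LJ.
  rewrite (RInt_ext _ dphi).
  2: { intros s Hs. rewrite Rmin_left, Rmax_right in Hs by lra. unfold dphi, X, Y, XU, YU. simpl.
       rewrite !ext2_eq by lra. rewrite !extI_eq by lra. reflexivity. }
  rewrite HI. unfold phi, X, Y. rewrite !ext2_eq by lra.
  unfold minus, plus, opp; simpl.
  replace (0 + 1) with 1 by ring. replace (-1 + 1) with 0 by ring.
  rewrite E1, E2. unfold Jw; simpl. field. split; auto. lra.
Qed.

End FTC.

Lemma Fderiv_unique : forall f U L1 L2, is_Fderiv f U L1 -> is_Fderiv f U L2 ->
  forall h, inY h -> L1 h = L2 h.
Proof.
  intros f U L1 L2 [[A1 [S1 _]] D1] [[A2 [S2 _]] D2] h Hh.
  destruct (Req_dec (L1 h) (L2 h)) as [E|NE]; auto. exfalso.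
  pose (D := Rabs (L1 h - L2 h)).
  assert (HD : 0 < D) by (apply Rabs_pos_lt; lra).
  pose (N := Unorm h + 1). assert (HN : 0 < N) by (unfold N; assert (H := Unorm_nonneg h); lra).
  pose (e := D / (4 * N)). assert (He : 0 < e) by (apply Rdiv_lt_0_compat; lra).
  destruct (D1 e He) as (d1 & Hd1 & K1). destruct (D2 e He) as (d2 & Hd2 & K2).
  pose (t := Rmin d1 d2 / (2 * N)).
  assert (Ht : 0 < t) by (apply Rdiv_lt_0_compat; [apply Rmin_case; lra| lra]).
  assert (Hh' := inY_scal h t Hh).
  assert (Hn' : Unorm (Uscal t h) <= t * N).
  { eapply Rle_trans. apply Unorm_scal; auto. rewrite Rabs_pos_eq by lra.
    apply Rmult_le_compat_l. lra. unfold N; lra. }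
  assert (HtN : t * N < Rmin d1 d2).
  { unfold t. field_simplify. 2: lra. assert (0 < Rmin d1 d2) by (apply Rmin_case; lra). lra. }
  assert (Hl1 : Unorm (Uscal t h) < d1) by (assert (Rmin d1 d2 <= d1) by apply Rmin_l; lra).
  assert (Hl2 : Unorm (Uscal t h) < d2) by (assert (Rmin d1 d2 <= d2) by apply Rmin_r; lra).
  specialize (K1 _ Hh' Hl1). specialize (K2 _ Hh' Hl2).
  rewrite (S1 t h Hh) in K1. rewrite (S2 t h Hh) in K2.
  assert (Habs : Rabs (t * L1 h - t * L2 h) <= 2 * e * Unorm (Uscal t h)).
  { replace (t * L1 h - t * L2 h) with ((f (Uadd U (Uscal t h)) - f U - t * L2 h) - (f (Uadd U (Uscal t h)) - f U - t * L1 h)) by ring.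
    unfold Rminus at 1. eapply Rle_trans. apply Rabs_triang. rewrite Rabs_Ropp. lra. }
  replace (t * L1 h - t * L2 h) with (t * (L1 h - L2 h)) in Habs by ring.
  rewrite Rabs_mult, (Rabs_pos_eq t) in Habs by lra. fold D in Habs.
  assert (2 * e * Unorm (Uscal t h) <= 2 * e * (t * N)) by (apply Rmult_le_compat_l; lra).
  assert (2 * e * (t * N) = t * D / 2) by (unfold e; field; lra).
  assert (0 < t * D) by (apply Rmult_lt_0_compat; lra). lra.
Qed.

Lemma Fderiv_transfer : forall f U L L', is_Fderiv f U L -> (forall h, inY h -> L h = L' h) ->
  is_Fderiv f U L'.
Proof.
  intros f U L L' [[A [S [M HM]]] D] E. split; [split; [|split]|].
  - intros x y Hx Hy. rewrite <- !E; auto. apply inY_add; auto.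
  - intros a x Hx. rewrite <- !E; auto. apply inY_scal; auto.
  - exists M. intros x Hx. rewrite <- E; auto.
  - intros eps Heps. destruct (D eps Heps) as (d & Hd & K). exists d. split; auto.
    intros h Hh Hn. rewrite <- E; auto.
Qed.

Lemma Wlemma : forall (W : R -> R) (D : R), is_lim (fun r => W r / r ^ 2) 0 0 -> is_derive W 0 D ->
  W 0 = 0 /\ D = 0.
Proof.
  intros W D Hl Hd. apply is_lim_Reals in Hl. apply is_derive_Reals in Hd.
  unfold limit1_in, limit_in in Hl. simpl in Hl. unfold R_dist in Hl.
  destruct (Hl 1 ltac:(lra)) as (a & Ha & Ka).
  assert (Kw : forall x, x <> 0 -> Rabs x < a -> Rabs (W x) <= x ^ 2).
  { intros x Hx Hxa. assert (Hx2 : 0 < x ^ 2) by (apply pow_lt_0_compat || (simpl; nra)).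
    assert (Hx' : Rabs (x - 0) < a) by (rewrite Rminus_0_r; exact Hxa).
    specialize (Ka x (conj Hx Hx')).
    rewrite Rminus_0_r in Ka. replace (x * (x * 1)) with (x ^ 2) in Ka by ring. unfold Rdiv in Ka. rewrite Rabs_mult, Rabs_inv, (Rabs_pos_eq (x^2)) in Ka by lra.
    apply (Rmult_le_reg_r (/ x ^ 2)). apply Rinv_0_lt_compat; lra. rewrite Rinv_r by lra. lra. }
  assert (W0 : W 0 = 0).
  { destruct (Req_dec (W 0) 0) as [E|NE]; auto. exfalso.
    assert (HW : 0 < Rabs (W 0)) by (apply Rabs_pos_lt; auto).
    destruct (Hd 1 ltac:(lra)) as [d Kd].
    pose (h := Rmin (Rmin d a) (Rmin 1 (Rabs (W 0) / (2 * (Rabs D + 2)))) / 2).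
    assert (Hd0 := cond_pos d).
    assert (HDp : 0 < Rabs D + 2) by (assert (H := Rabs_pos D); lra).
    assert (Hq : 0 < Rabs (W 0) / (2 * (Rabs D + 2))) by (apply Rdiv_lt_0_compat; lra).
    assert (Hm : 0 < Rmin (Rmin d a) (Rmin 1 (Rabs (W 0) / (2 * (Rabs D + 2))))) by
      (repeat apply Rmin_case; lra).
    assert (Hh0 : 0 < h) by (unfold h; lra).
    assert (Hm1 : Rmin (Rmin d a) (Rmin 1 (Rabs (W 0) / (2 * (Rabs D + 2)))) <= d)
      by (eapply Rle_trans; apply Rmin_l).
    assert (Hm2 : Rmin (Rmin d a) (Rmin 1 (Rabs (W 0) / (2 * (Rabs D + 2)))) <= a)
      by (eapply Rle_trans; [apply Rmin_l| apply Rmin_r]).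
    assert (Hm3 : Rmin (Rmin d a) (Rmin 1 (Rabs (W 0) / (2 * (Rabs D + 2)))) <= 1)
      by (eapply Rle_trans; [apply Rmin_r| apply Rmin_l]).
    assert (Hm4 : Rmin (Rmin d a) (Rmin 1 (Rabs (W 0) / (2 * (Rabs D + 2)))) <= Rabs (W 0) / (2 * (Rabs D + 2)))
      by (eapply Rle_trans; [apply Rmin_r| apply Rmin_r]).
    assert (Hha : Rabs h = h) by (apply Rabs_pos_eq; lra).
    specialize (Kd h ltac:(lra) ltac:(rewrite Hha; unfold h; lra)).
    specialize (Kw h ltac:(lra) ltac:(rewrite Hha; unfold h; lra)).
    rewrite Rplus_0_l in Kd.
    replace ((W h - W 0) / h - D) with ((W h - W 0 - D * h) / h) in Kd by (field; lra).
    unfold Rdiv in Kd. rewrite Rabs_mult, Rabs_inv, Hha in Kd.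
    assert (Kd' : Rabs (W h - W 0 - D * h) < h).
    { apply (Rmult_lt_reg_r (/ h)). apply Rinv_0_lt_compat; lra. rewrite Rinv_r by lra. lra. }
    assert (Hh1 : h <= 1) by (unfold h; lra).
    assert (Hh2 : h * (Rabs D + 2) <= Rabs (W 0) / 2).
    { apply Rle_trans with (Rabs (W 0) / (2 * (Rabs D + 2)) / 2 * (Rabs D + 2)).
      apply Rmult_le_compat_r. lra. unfold h; lra.
      replace (Rabs (W 0) / (2 * (Rabs D + 2)) / 2 * (Rabs D + 2)) with (Rabs (W 0) / 4) by (field; lra). lra. }
    assert (Hsq : h ^ 2 <= h) by (simpl; nra).
    assert (Rabs (D * h) = Rabs D * h) by (rewrite Rabs_mult, Hha; auto).
    assert (Rabs (W 0) <= Rabs (W h) + Rabs (D * h) + Rabs (W h - W 0 - D * h)).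
    { replace (W 0) with (W h - D * h - (W h - W 0 - D * h)) at 1 by ring.
      unfold Rminus. eapply Rle_trans. apply Rabs_triang. rewrite Rabs_Ropp.
      apply Rplus_le_compat_r. eapply Rle_trans. apply Rabs_triang. rewrite Rabs_Ropp. lra. }
    nra. }
  split; auto.
  destruct (Req_dec D 0) as [E|NE]; auto. exfalso.
  assert (HD : 0 < Rabs D) by (apply Rabs_pos_lt; auto).
  destruct (Hd (Rabs D / 4) ltac:(lra)) as [d Kd].
  assert (Hd0 := cond_pos d).
  pose (h := Rmin (Rmin d a) (Rabs D / 4) / 2).
  assert (Hm : 0 < Rmin (Rmin d a) (Rabs D / 4)) by (repeat apply Rmin_case; lra).
  assert (Hm1 : Rmin (Rmin d a) (Rabs D / 4) <= d) by (eapply Rle_trans; apply Rmin_l).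
  assert (Hm2 : Rmin (Rmin d a) (Rabs D / 4) <= a) by (eapply Rle_trans; [apply Rmin_l| apply Rmin_r]).
  assert (Hm3 : Rmin (Rmin d a) (Rabs D / 4) <= Rabs D / 4) by apply Rmin_r.
  assert (Hh0 : 0 < h) by (unfold h; lra).
  assert (Hha : Rabs h = h) by (apply Rabs_pos_eq; lra).
  specialize (Kd h ltac:(lra) ltac:(rewrite Hha; unfold h; lra)).
  specialize (Kw h ltac:(lra) ltac:(rewrite Hha; unfold h; lra)).
  rewrite Rplus_0_l, W0, Rminus_0_r in Kd.
  assert (Hq : Rabs (W h / h) <= h).
  { unfold Rdiv. rewrite Rabs_mult, Rabs_inv, Hha.
    apply (Rmult_le_reg_r h). lra. rewrite Rmult_assoc, Rinv_l by lra. simpl in Kw. lra. }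
  assert (Rabs D <= Rabs (W h / h) + Rabs (W h / h - D)).
  { replace D with (W h / h - (W h / h - D)) at 1 by ring. unfold Rminus at 1.
    eapply Rle_trans. apply Rabs_triang. rewrite Rabs_Ropp. lra. }
  assert (h <= Rabs D / 8) by (unfold h; lra).
  lra.
Qed.

Lemma second_deriv : forall V W a b, analytic_on (fun _ => True) Rplus Rmult Rabs V ->
  (forall r, is_derive V r (a * r + b * r ^ 2 + W r)) ->
  is_lim (fun r => W r / r ^ 2) 0 0 -> Derive (Derive V) 0 = a.
Proof.
  intros V W a b Han HV HW.
  assert (EV : forall r, Derive V r = a * r + b * r ^ 2 + W r) by (intros; apply is_derive_unique, HV).
  assert (Hex : ex_derive (Derive V) 0) by exact (G_smooth V Han 0 0).
  assert (HD := Derive_correct _ _ Hex).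
  assert (HWd : is_derive W 0 (Derive (Derive V) 0 - a)).
  { apply (is_derive_ext (fun r => Derive V r - a * r - b * r ^ 2)).
    intros t. rewrite EV. reqR. ring.
    auto_derive. exact Hex. change (fun x : R => Derive V x) with (Derive V). reqR. ring. }
  destruct (Wlemma W _ HW HWd) as [_ H0]. lra.
Qed.

Lemma CE_reflect : forall f, CE f -> CE (fun s => f (- s - 1)).
Proof.
  intros f [g [Hg Hfg]]. exists (fun s => g (- s - 1)). split.
  - intros x. apply (continuous_comp (fun s => - s - 1) g). 2: apply Hg.
    apply (@ex_derive_continuous R_AbsRing R_NormedModule (fun s : R => - s - 1)). auto_derive. auto.
  - intros s Hs. apply Hfg. lra.
Qed.

Lemma RInt_reflect : forall f, CE f -> RInt (fun s => f (- s - 1)) (-1) 0 = RInt f (-1) 0.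
Proof.
  intros f Hf.
  assert (Hex : ex_RInt f (-1 * -1 + -1) (-1 * 0 + -1)).
  { replace (-1 * -1 + -1) with 0 by ring. replace (-1 * 0 + -1) with (-1) by ring.
    apply ex_RInt_swap. apply CE_ex_RInt; auto. }
  assert (HC := RInt_comp_lin f (-1) (-1) (-1) 0 Hex).
  replace (-1 * -1 + -1) with 0 in HC by ring. replace (-1 * 0 + -1) with (-1) in HC by ring.
  rewrite <- (opp_RInt_swap f) in HC by (apply CE_ex_RInt; auto).
  rewrite (RInt_ext _ (fun y => -1 * f (- y - 1))) in HC.
  2: { intros x _. unfold scal; simpl; unfold mult; simpl. f_equal. f_equal. ring. }
  rewrite RInt_scalR in HC by (apply CE_ex_RInt, CE_reflect; auto).
  unfold opp in HC; simpl in HC. lra.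
Qed.

Lemma ex_RInt_01 : forall (P Q : R -> R) k, cont_on_I P -> cont_on_I Q ->
  ex_RInt (fun s => k * P s + Q s) 0 1.
Proof.
  intros P Q k HP HQ. apply (ex_RInt_ext (fun s => k * extI P s + extI Q s)).
  intros x Hx. rewrite Rmin_left, Rmax_right in Hx by lra. rewrite !extI_eq by lra. reflexivity.
  apply (@ex_RInt_continuous R_CompleteNormedModule). intros z _.
  apply (continuous_plus (fun s => k * extI P s) (extI Q)).
  apply (continuous_mult (fun _ => k) (extI P)). apply continuous_const. apply extI_cont; auto.
  apply extI_cont; auto.
Qed.

Theorem proposition3p10 (w kappa beta c : R) (V1 V2 W1 W2 : R -> R) :
  0 < w -> 0 < kappa -> c <> 0 ->
  analytic_on (fun _ => True) Rplus Rmult Rabs V1 ->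
  analytic_on (fun _ => True) Rplus Rmult Rabs V2 ->
  (forall r, is_derive V1 r (r + r ^ 2 + W1 r)) ->
  (forall r, is_derive V2 r (kappa * r + beta * r ^ 2 + W2 r)) ->
  is_lim (fun r => W1 r / r ^ 2) 0 0 ->
  is_lim (fun r => W2 r / r ^ 2) 0 0 ->
  (* (i) *)
  (analytic_on XRdom XRadd XRscal XRnorm (fun x => Jfun V1 V2 w (snd x) (fst x)) /\
   forall U Q1 Q2, inX U -> cont_on_I Q1 -> cont_on_I Q2 ->
     deriv_on_I (P1 U) Q1 -> deriv_on_I (P2 U) Q2 ->
     (exists L, is_Fderiv (Jfun V1 V2 w c) U L) /\
     (forall L, is_Fderiv (Jfun V1 V2 w c) U L -> L (Ffield V1 V2 w c U Q1 Q2) = 0)) /\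
  (* (ii) *)
  is_Fderiv (Jfun V1 V2 w c) U0
    (fun U => c ^ 2 * xi1 U + c ^ 2 / w * xi2 U
              + RInt (fun s => P1 U s + kappa * P2 U s) (-1) 0
              - RInt (fun s => kappa * P1 U s + P2 U s) 0 1) /\
  (* (iii) *)
  (V1 = V2 -> forall U, inX U -> Jfun V1 V2 w c (SM U) = Jfun V1 V2 w c U) /\
  (w = 1 -> forall U, inX U -> Jfun V1 V2 1 c (SK U) = Jfun V1 V2 1 c U) /\
  (* (iv) *)
  (forall U mu, inX U -> Jfun V1 V2 w c (Uadd U (Uscal mu chi0)) = Jfun V1 V2 w c U) /\
  (* (v) *)
  bounded_linear_on inX Uadd Uscal Unorm (Jw w) /\
  (forall U c', inX U -> Jfun V1 V2 w c U - Jfun V1 V2 w c' U = (c ^ 2 - c' ^ 2) * Jw w U).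
Proof.
  intros Hw Hk Hc H1 H2 HV1 HV2 HW1 HW2.
  assert (Gs1 := G_smooth V1 H1). assert (Gs2 := G_smooth V2 H2).
  split; [split|split; [|split; [|split; [|split; [|split]]]]].
  - apply J_analytic; auto.
  - intros U Q1 Q2 HU C1 C2 D1 D2. split.
    + exists (LJ V1 V2 w c U). apply J_Fderiv; auto. apply HU.
    + intros L HL. assert (HF : inY (Ffield V1 V2 w c U Q1 Q2)) by (split; assumption).
      rewrite (Fderiv_unique _ _ _ _ HL (J_Fderiv V1 V2 w c Hw H1 H2 U (proj1 HU)) _ HF).
      apply LJ_F; auto.
  - apply (Fderiv_transfer _ _ (LJ V1 V2 w c U0)). apply J_Fderiv; auto. apply inY_U0.
    intros h Hh.
    assert (DD1 : Derive (Derive V1) 0 = 1).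
    { apply (second_deriv V1 W1 1 1 H1). intros r. replace (1 * r + 1 * r ^ 2 + W1 r) with (r + r ^ 2 + W1 r) by ring.
      apply HV1. exact HW1. }
    assert (DD2 : Derive (Derive V2) 0 = kappa) by (apply (second_deriv V2 W2 kappa beta H2); auto).
    unfold LJ.
    rewrite (RInt_ext _ (fun s => (kappa * P1 h (s + 1) + P2 h (s + 1)) - (P1 h s + kappa * P2 h s))).
    2: { intros s _. unfold XU, YU. simpl. replace (0 - 0) with 0 by ring.
         change (Derive (fun x => Derive V1 x) 0) with (Derive (Derive V1) 0).
         change (Derive (fun x => Derive V2 x) 0) with (Derive (Derive V2) 0).
         rewrite DD1, DD2. reqR. ring. }
    destruct Hh as [Hh1 Hh2].
    rewrite RInt_minusR.
    2: { apply CE_ex_RInt. apply (CE_plus (fun s => kappa * P1 h (s + 1)) (fun s => P2 h (s + 1))).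
         apply (CE_mult (fun _ => kappa) (fun s => P1 h (s + 1))). apply CE_const. apply CE_Ps; auto.
         apply CE_Ps; auto. }
    2: { apply CE_ex_RInt. apply (CE_plus (P1 h) (fun s => kappa * P2 h s)). apply CE_P; auto.
         apply (CE_mult (fun _ => kappa) (P2 h)). apply CE_const. apply CE_P; auto. }
    assert (Hex := ex_RInt_01 (P1 h) (P2 h) kappa Hh1 Hh2).
    assert (Hex' : ex_RInt (fun s => kappa * P1 h s + P2 h s) (1 * -1 + 1) (1 * 0 + 1)).
    { replace (1 * -1 + 1) with 0 by ring. replace (1 * 0 + 1) with 1 by ring. exact Hex. }
    assert (HC := RInt_comp_lin (fun s => kappa * P1 h s + P2 h s) 1 1 (-1) 0 Hex').
    replace (1 * -1 + 1) with 0 in HC by ring. replace (1 * 0 + 1) with 1 in HC by ring.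
    rewrite (RInt_ext _ (fun s => kappa * P1 h (s + 1) + P2 h (s + 1))) in HC.
    2: { intros x _. unfold scal; simpl; unfold mult; simpl. replace (1 * x + 1) with (x + 1) by ring. reqR. ring. }
    rewrite HC. unfold Jw. field. lra.
  - intros E U HU. subst V2.
    rewrite !Jfun_eq. f_equal.
    rewrite <- (RInt_reflect (fun t => Derive V1 (XU U t) + Derive V1 (YU U t))).
    + apply RInt_ext. intros s _.
      assert (E1 : - (s + 1) = - s - 1) by ring. assert (E2 : - s - 1 + 1 = - s) by ring.
      unfold XU, YU, SM. simpl. rewrite E1, E2.
      rewrite Rplus_comm. f_equal; f_equal; ring.
    + destruct HU as [HY _]. apply CE_plus; apply CE_comp; try (intros; apply (G_cont _ Gs1 0)).
      apply CE_XU; auto. apply CE_YU; auto.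
  - intros E U HU.
    rewrite !Jfun_eq. f_equal.
    + unfold Jw; simpl. field.
    + rewrite <- (RInt_reflect (fun t => Derive V1 (XU U t) + Derive V2 (YU U t))).
      * apply RInt_ext. intros s _.
        assert (E1 : - (s + 1) = - s - 1) by ring. assert (E2 : - s - 1 + 1 = - s) by ring.
        unfold XU, YU, SK. simpl. rewrite E1, E2.
        f_equal; f_equal; ring.
      * destruct HU as [HY _]. apply CE_plus; apply CE_comp.
        intros; apply (G_cont _ Gs1 0). apply CE_XU; auto.
        intros; apply (G_cont _ Gs2 0). apply CE_YU; auto.
  - intros U mu HU. rewrite !Jfun_eq. f_equal.
    + unfold Jw; simpl. field. lra.
    + apply RInt_ext. intros s _. unfold XU, YU; simpl. f_equal; f_equal; ring.
  - split; [|split].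
    + intros x y _ _. apply Jw_add; auto.
    + intros a x _. apply Jw_scal; auto.
    + exists (1 + / w). intros x _. apply Jw_bound; auto.
  - intros U c' _. rewrite !Jfun_eq. ring.
Qed.
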